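(* Let $0=t_0<t_1<\cdots<t_N=T$ be a time grid with steps $\tau_k=t_k-t_{k-1}$ ($1\le k\le N$), maximal step $\tau=\max_{1\le k\le N}\tau_k$ and ratios $r_k=\tau_k/\tau_{k-1}$ ($2\le k\le N$). Let $r_{\max}=\frac16\big(\sqrt[3]{1196-12\sqrt{177}}+\sqrt[3]{1196+12\sqrt{177}}\big)+\frac43\approx 4.8645$ be the positive root of $x^3=(2x+1)^2$, fix $\delta\in(0,r_{\max})$, and assume $r_2>0$ and $0<r_k\le r_{\max}-\delta$ for $3\le k\le N$. Let $M\ge 2$, $h=(x_r-x_l)/M$, $x_i=x_l+ih$, and let $\mathcal V_h$ be the set of grid functions $v=(v_0,\dots,v_M)$ with $v_0=v_M=0$, with $\Delta_h v_i=(v_{i+1}-2v_i+v_{i-1})/h^2$, $\nabla_h v_i=(v_{i+1}-v_{i-1})/(2h)$ for $1\le i\le M-1$, $\langle u,v\rangle=\sum_{i=1}^{M-1}h u_iv_i$, $\|u\|=\sqrt{\langle u,u\rangle}$, $|u|_1=\sqrt{\langle -\Delta_h u,u\rangle}$. Let $c_1>0$, $c_2,c_3\in\mathbb R$, let $\mathcal J_h$ be a linear operator on grid functions (the composite trapezoidal discretization $\mathcal J_h(v)_i=\frac h2\big(v_0\rho(x_0-x_i)+2\sum_{j=1}^{M-1}v_j\rho(x_j-x_i)+v_M\rho(x_M-x_i)\big)$ of the nonlocal integral operator with a bounded kernel $\rho$), and let $C_J>0$ satisfy $\|\mathcal J_h(v)\|\le C_J\|v\|$ for all $v\in\mathcal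 V_h$. Suppose $\phi^n\in\mathcal V_h$ ($0\le n\le N$) and grid functions $\zeta^n$ ($1\le n\le N$) satisfy, at all interior points $x_i$, $1\le i\le M-1$, $$\sum_{k=1}^n b^{(n)}_{n-k}(\phi^k-\phi^{k-1})-c_1\Delta_h\phi^n+c_2\nabla_h\phi^n+c_3\phi^n+\mathcal J_h(E\phi^{n-1})=\zeta^n,\qquad 1\le n\le N,$$ where $E\phi^{n-1}=(1+r_n)\phi^{n-1}-r_n\phi^{n-2}$ for $n\ge2$ and $E\phi^0=\phi^0$. Set $C_r=\sqrt{r_{\max}}/(1+r_{\max})^2$, $c_r=r_{\max}^{5/2}$, $$C_1=\frac{c_2^2}{c_1C_r\delta}+2|c_3|+2C_J(1+2r_{\max}),\qquad C_2=\frac{4c_r}{\delta}\sqrt{c_1r_2}.$$ If $$\tau\le\min\Big\{\frac1{2C_1},\ \frac1{2(c_2^2/c_1+4|c_3|+2C_J)},\ \frac1{4(5C_J+4|c_3|)}\Big\},$$ then for $n\ge2$ $$\|\phi^n\|\le 2\exp(2C_1t_{n-1})\Big((3+r_2)\|\phi^0\|+7\sum_{k=1}^n p^{(n)}_{n-k}\|\zeta^k\|+6p^{(n)}_{n-2}C_J(\tau_1+\tau_2)\|\zeta^1\|+C_2\sqrt\tau\,|\phi^0|_1\Big)$$ $$\le 2\exp(2C_1t_{n-1})\Big((3+r_2)\|\phi^0\|+7t_n\max_{1\le k\le n}\|\zeta^k\|+6p^{(n)}_{n-2}C_J(\tau_1+\tau_2)\|\zeta^1\|+C_2\sqrt\tau\,|\phi^0|_1\Big),$$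 and moreover $\|\phi^1\|\le 2\|\phi^0\|+3t_1\|\zeta^1\|$.
   Context: BDF2 kernels: $b^{(1)}_0=1/\tau_1$; for $n\ge2$, $b^{(n)}_0=\frac{1+2r_n}{\tau_n(1+r_n)}$, $b^{(n)}_1=-\frac{r_n^2}{\tau_n(1+r_n)}$, $b^{(n)}_j=0$ for $2\le j\le n-1$. The discrete complementary convolution (DCC) kernels $p^{(n)}_{n-j}$ ($1\le j\le n$) are defined by $\sum_{j=k}^n p^{(n)}_{n-j}b^{(j)}_{j-k}=1$ for all $1\le k\le n$, $1\le n\le N$. *)

(* Defs.v *)
From Stdlib Require Import Reals Lra Lia List.
Open Scope R_scope.

(* sum_{i=lo}^{hi} f i  (empty, = 0, if hi < lo) *)
Definition sumR (lo hi : nat) (f : nat -> R) : R :=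
  fold_right Rplus 0 (map f (seq lo (S hi - lo))).

(* max_{lo <= i <= hi} f i  (for lo <= hi) *)
Definition maxR (lo hi : nat) (f : nat -> R) : R :=
  fold_right Rmax (f lo) (map f (seq lo (S hi - lo))).

Definition tau (t : nat -> R) (k : nat) : R := t k - t (k - 1)%nat.
Definition ratio (t : nat -> R) (k : nat) : R := tau t k / tau t (k - 1)%nat.
Definition taumax (t : nat -> R) (N : nat) : R := maxR 1 N (tau t).

Definition bdf2 (t : nat -> R) (n j : nat) : R :=
  if Nat.eqb n 1 then (if Nat.eqb j 0 then 1 / tau t 1 else 0)
  else if Nat.eqb j 0 then (1 + 2 * ratio t n) / (tau t n * (1 + ratio t n))
  else if Nat.eqb j 1 then - (ratio t n ^ 2) / (tau t n * (1 + ratio t n))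
  else 0.

(* p is the family of DCC kernels p^{(n)}_{n-j} (written p n (n-j)) *)
Definition is_DCC (t : nat -> R) (N : nat) (p : nat -> nat -> R) : Prop :=
  forall n k : nat, (1 <= n <= N)%nat -> (1 <= k <= n)%nat ->
    sumR k n (fun j => p n (n - j)%nat * bdf2 t j (j - k)%nat) = 1.

Definition hstep (xl xr : R) (M : nat) : R := (xr - xl) / INR M.
Definition xgrid (xl xr : R) (M : nat) (i : nat) : R := xl + INR i * hstep xl xr M.

Definition in_Vh (M : nat) (v : nat -> R) : Prop := v 0%nat = 0 /\ v M = 0.

Definition lapl (h : R) (v : nat -> R) (i : nat) : R :=
  (v (S i) - 2 * v i + v (i - 1)%nat) / h ^ 2.
Definition grad (h : R) (v : nat -> R) (i : nat) : R :=
  (v (S i) - v (i - 1)%nat) / (2 * h).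

Definition ip (h : R) (M : nat) (u v : nat -> R) : R :=
  sumR 1 (M - 1) (fun i => h * u i * v i).
Definition nrm (h : R) (M : nat) (u : nat -> R) : R := sqrt (ip h M u u).
Definition semi1 (h : R) (M : nat) (u : nat -> R) : R :=
  sqrt (ip h M (fun i => - lapl h u i) u).

Definition Jh (rho : R -> R) (xl xr : R) (M : nat) (v : nat -> R) (i : nat) : R :=
  let h := hstep xl xr M in
  let x := xgrid xl xr M in
  h / 2 * (v 0%nat * rho (x 0%nat - x i)
           + 2 * sumR 1 (M - 1) (fun j => v j * rho (x j - x i))
           + v M * rho (x M - x i)).

Definition Ephi (t : nat -> R) (phi : nat -> nat -> R) (n : nat) (i : nat) : R :=
  if Nat.leb n 1 then phi 0%nat i
  else (1 + ratio t n) * phi (n - 1)%nat i - ratio t n * phi (n - 2)%nat i.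

(* Main.v *)
Require Import Defs.
From Stdlib Require Import Reals Lra Lia List Arith Psatz.
Open Scope R_scope.

Lemma fold_plus_acc : forall (l : list R) x, fold_right Rplus x l = fold_right Rplus 0 l + x.
Proof. induction l; intros; simpl; [lra| rewrite IHl; lra]. Qed.

Lemma sumR_S : forall k n f, (k <= S n)%nat -> sumR k (S n) f = sumR k n f + f (S n).
Proof.
  intros k n f H. unfold sumR.
  replace (S (S n) - k)%nat with (S (S n - k)) by lia.
  rewrite seq_S. replace (k + (S n - k))%nat with (S n) by lia.
  rewrite map_app, fold_right_app. simpl. rewrite fold_plus_acc. lra.
Qed.

Lemma sumR_nil : forall k n f, (n < k)%nat -> sumR k n f = 0.
Proof. intros. unfold sumR. replace (S n - k)%nat with 0%nat by lia. reflexivity. Qed.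

Lemma sumR_ext : forall k n f g, (forall i, (k <= i <= n)%nat -> f i = g i) -> sumR k n f = sumR k n g.
Proof.
  intros k n. induction n; intros f g H.
  - destruct k. + unfold sumR. simpl. rewrite H by lia. reflexivity.
    + rewrite !sumR_nil by lia. reflexivity.
  - destruct (le_lt_dec k (S n)).
    + rewrite !sumR_S by lia. rewrite IHn with (g:=g) by (intros; apply H; lia). rewrite H by lia. reflexivity.
    + rewrite !sumR_nil by lia. reflexivity.
Qed.

Lemma sumR_first : forall k n f, (k <= n)%nat -> sumR k n f = f k + sumR (S k) n f.
Proof. intros. unfold sumR. replace (S n - k)%nat with (S (S n - S k)) by lia. simpl. reflexivity. Qed.

Lemma sumR_plus : forall k n f g, sumR k n (fun i => f i + g i) = sumR k n f + sumR k n g.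
Proof.
  intros k n. induction n; intros.
  - destruct k. + unfold sumR; simpl; lra. + rewrite !sumR_nil by lia; lra.
  - destruct (le_lt_dec k (S n)).
    + rewrite !sumR_S by lia. rewrite IHn. lra.
    + rewrite !sumR_nil by lia; lra.
Qed.

Lemma sumR_scal : forall k n c f, sumR k n (fun i => c * f i) = c * sumR k n f.
Proof.
  intros k n. induction n; intros.
  - destruct k. + unfold sumR; simpl; lra. + rewrite !sumR_nil by lia; lra.
  - destruct (le_lt_dec k (S n)).
    + rewrite !sumR_S by lia. rewrite IHn. lra.
    + rewrite !sumR_nil by lia; lra.
Qed.

Lemma sumR_le : forall k n f g, (forall i, (k <= i <= n)%nat -> f i <= g i) -> sumR k n f <= sumR k n g.
Proof.
  intros k n. induction n; intros f g H.
  - destruct k. + unfold sumR. simpl. specialize (H 0%nat). assert (f 0%nat <= g 0%nat) by (apply H; lia). lra.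
    + rewrite !sumR_nil by lia. lra.
  - destruct (le_lt_dec k (S n)).
    + rewrite !sumR_S by lia. assert (f (S n) <= g (S n)) by (apply H; lia).
      assert (sumR k n f <= sumR k n g) by (apply IHn; intros; apply H; lia). lra.
    + rewrite !sumR_nil by lia. lra.
Qed.

Lemma sumR_zero : forall k n f, (forall i, (k <= i <= n)%nat -> f i = 0) -> sumR k n f = 0.
Proof.
  intros. rewrite sumR_ext with (g := fun i => 0 * f i).
  - rewrite sumR_scal. lra.
  - intros. rewrite H by auto. lra.
Qed.

Lemma sumR_nonneg : forall k n f, (forall i, (k <= i <= n)%nat -> 0 <= f i) -> 0 <= sumR k n f.
Proof.
  intros. replace 0 with (sumR k n (fun _ => 0)). apply sumR_le; auto.
  apply sumR_zero; auto.
Qed.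

Lemma sumR_minus : forall k n f g, sumR k n (fun i => f i - g i) = sumR k n f - sumR k n g.
Proof.
  intros. rewrite sumR_ext with (g := fun i => f i + (-1) * g i) by (intros; lra).
  rewrite sumR_plus, sumR_scal. lra.
Qed.

Lemma quad_disc : forall a b c, 0 <= a -> 0 <= c -> (forall x, 0 <= a + 2*x*b + x*x*c) -> b*b <= a*c.
Proof.
  intros a b c Ha Hc H.
  destruct (Rlt_or_le 0 c) as [Hc'|Hc'].
  - specialize (H (- b / c)).
    assert (E: a + 2 * (- b / c) * b + (- b / c) * (- b / c) * c = (a*c - b*b)/c) by (field; lra).
    rewrite E in H. apply Rmult_le_compat_r with (r:=c) in H; [|lra].
    unfold Rdiv in H. rewrite Rmult_assoc, Rinv_l in H by lra. lra.
  - assert (c = 0) by lra. subst c.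
    destruct (Req_dec b 0). subst; lra.
    specialize (H (-(a+1)/(2*b))).
    replace (a + 2 * (- (a + 1) / (2 * b)) * b + - (a + 1) / (2 * b) * (- (a + 1) / (2 * b)) * 0) with (-1) in H by (field; auto). lra.
Qed.

Lemma sq_le_sqrt : forall a b c, 0 <= a -> 0 <= c -> b*b <= a*c -> Rabs b <= sqrt a * sqrt c.
Proof.
  intros. rewrite <- sqrt_mult by auto. rewrite <- sqrt_Rsqr_abs. apply sqrt_le_1_alt. unfold Rsqr. lra.
Qed.

Section Grid.
Variable h : R.
Variable M : nat.
Hypothesis Hh : 0 < h.
Hypothesis HM : (2 <= M)%nat.

Lemma ip_ext : forall u u' v v', (forall i, (1 <= i <= M-1)%nat -> u i = u' i /\ v i = v' i) -> ip h M u v = ip h M u' v'.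
Proof. intros. unfold ip. apply sumR_ext. intros. destruct (H i H0) as [-> ->]. reflexivity. Qed.

Lemma ip_lin : forall a b u v w, ip h M (fun i => a * u i + b * v i) w = a * ip h M u w + b * ip h M v w.
Proof.
  intros. unfold ip. rewrite <- !sumR_scal, <- sumR_plus. apply sumR_ext. intros. ring.
Qed.

Lemma ip_sym : forall u v, ip h M u v = ip h M v u.
Proof. intros. unfold ip. apply sumR_ext. intros; ring. Qed.

Lemma ip_pos : forall u, 0 <= ip h M u u.
Proof. intros. unfold ip. apply sumR_nonneg. intros. rewrite Rmult_assoc. apply Rmult_le_pos; [lra| apply Rle_0_sqr]. Qed.

Lemma nrm_nonneg : forall u, 0 <= nrm h M u.
Proof. intros; unfold nrm; apply sqrt_pos. Qed.

Lemma nrm_sq : forall u, nrm h M u * nrm h M u = ip h M u u.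
Proof. intros; unfold nrm; apply sqrt_sqrt, ip_pos. Qed.

Lemma ip_CS : forall u v, Rabs (ip h M u v) <= nrm h M u * nrm h M v.
Proof.
  intros. apply sq_le_sqrt; try apply ip_pos.
  apply quad_disc; try apply ip_pos. intros x.
  pose proof (ip_pos (fun i => 1 * u i + x * v i)).
  rewrite ip_lin in H. rewrite (ip_sym _ (fun i => 1 * u i + x * v i)) in H.
  rewrite (ip_sym _ (fun i => 1 * u i + x * v i)) in H.
  rewrite !ip_lin in H. rewrite (ip_sym v u) in H. nra.
Qed.

Lemma ip_le : forall u v, ip h M u v <= nrm h M u * nrm h M v.
Proof. intros. pose proof (ip_CS u v). pose proof (Rle_abs (ip h M u v)). lra. Qed.

Lemma nrm_comb : forall a b u v, nrm h M (fun i => a * u i + b * v i) <= Rabs a * nrm h M u + Rabs b * nrm h M v.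
Proof.
  intros. unfold nrm at 1. rewrite <- (sqrt_Rsqr (Rabs a * nrm h M u + Rabs b * nrm h M v)).
  2:{ pose proof (nrm_nonneg u); pose proof (nrm_nonneg v); pose proof (Rabs_pos a); pose proof (Rabs_pos b); nra. }
  apply sqrt_le_1_alt. unfold Rsqr.
  rewrite ip_lin. rewrite !(ip_sym _ (fun i => a * u i + b * v i)), !ip_lin.
  pose proof (ip_CS u v) as C. rewrite (ip_sym v u).
  rewrite <- !nrm_sq.
  assert (a * b * ip h M u v <= Rabs a * Rabs b * (nrm h M u * nrm h M v)).
  { rewrite <- Rabs_mult. apply Rle_trans with (Rabs (a*b*ip h M u v)). apply Rle_abs.
    rewrite Rabs_mult. apply Rmult_le_compat_l. apply Rabs_pos. auto. }
  assert (a*a = Rabs a * Rabs a) by (rewrite <- Rabs_mult; rewrite Rabs_right; nra).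
  assert (b*b = Rabs b * Rabs b) by (rewrite <- Rabs_mult; rewrite Rabs_right; nra).
  nra.
Qed.

Lemma nrm_ext : forall u u', (forall i, (1 <= i <= M-1)%nat -> u i = u' i) -> nrm h M u = nrm h M u'.
Proof. intros. unfold nrm. f_equal. apply ip_ext. intros. split; auto. Qed.

Definition aform (u v : nat -> R) := ip h M (fun i => - lapl h u i) v.

Lemma a_sum_parts : forall u v K,
  sumR 1 K (fun i => h * (- lapl h u i) * v i) =
  sumR 0 K (fun i => (u (S i) - u i) * (v (S i) - v i) / h) + (u 1%nat - u 0%nat) * v 0%nat / h - (u (S K) - u K) * v (S K) / h.
Proof.
  intros. induction K.
  - rewrite sumR_nil by lia. unfold sumR. simpl. field. lra.
  - rewrite !sumR_S by lia. rewrite IHK. unfold lapl. replace (S K - 1)%nat with K by lia. field. lra.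
Qed.

Lemma a_repr : forall u v, in_Vh M u -> in_Vh M v ->
  aform u v = sumR 0 (M-1) (fun i => (u (S i) - u i) * (v (S i) - v i) / h).
Proof.
  intros u v [Hu0 HuM] [Hv0 HvM]. unfold aform, ip. rewrite a_sum_parts.
  replace (S (M-1)) with M by lia. rewrite Hv0, HvM. field. lra.
Qed.

Lemma a_sym : forall u v, in_Vh M u -> in_Vh M v -> aform u v = aform v u.
Proof. intros. rewrite !a_repr by auto. apply sumR_ext. intros. field. lra. Qed.

Lemma a_pos : forall u, in_Vh M u -> 0 <= aform u u.
Proof. intros. rewrite a_repr by auto. apply sumR_nonneg. intros. unfold Rdiv.
  apply Rmult_le_pos. apply Rle_0_sqr. left; apply Rinv_0_lt_compat; lra. Qed.

Lemma a_lin : forall a b u v w, aform (fun i => a * u i + b * v i) w = a * aform u w + b * aform v w.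
Proof.
  intros. unfold aform. rewrite <- ip_lin. apply ip_ext. intros. split; auto. unfold lapl. field. lra.
Qed.

Lemma in_Vh_comb : forall a b u v, in_Vh M u -> in_Vh M v -> in_Vh M (fun i => a * u i + b * v i).
Proof. intros a b u v [? ?] [? ?]. split; simpl; rewrite ?H, ?H0, ?H1, ?H2; ring. Qed.

Lemma a_CS : forall u v, in_Vh M u -> in_Vh M v -> Rabs (aform u v) <= sqrt (aform u u) * sqrt (aform v v).
Proof.
  intros. apply sq_le_sqrt; try apply a_pos; auto.
  apply quad_disc; try apply a_pos; auto. intros x.
  pose proof (a_pos (fun i => 1 * u i + x * v i) (in_Vh_comb 1 x u v H H0)).
  rewrite a_lin in H1. rewrite (a_sym u), (a_sym v) in H1 by (auto; apply in_Vh_comb; auto).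
  rewrite !a_lin in H1. rewrite (a_sym v u) in H1 by auto. nra.
Qed.

Lemma grad_skew : forall v, in_Vh M v -> ip h M (grad h v) v = 0.
Proof.
  intros v [H0 HM'].
  assert (forall K, sumR 1 K (fun i => h * grad h v i * v i) = (v (S K) * v K - v 1%nat * v 0%nat)/2).
  { induction K. - rewrite sumR_nil by lia. field.
    - rewrite sumR_S by lia. rewrite IHK. unfold grad. replace (S K - 1)%nat with K by lia. field. lra. }
  unfold ip. rewrite H. replace (S (M-1)) with M by lia. rewrite H0, HM'. field.
Qed.

Lemma sq_shift : forall (e : nat -> R) K,
  sumR 1 K (fun i => (e i * e i + e (i-1)%nat * e (i-1)%nat)/2) + (e 0%nat * e 0%nat + e K * e K)/2 = sumR 0 K (fun i => e i * e i).
Proof.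
  intros. induction K.
  - rewrite sumR_nil by lia. unfold sumR. simpl. lra.
  - rewrite !sumR_S by lia. replace (S K - 1)%nat with K by lia. lra.
Qed.

Lemma grad_bound : forall v, in_Vh M v -> ip h M (grad h v) (grad h v) <= aform v v.
Proof.
  intros. rewrite a_repr by auto. unfold ip.
  set (e := fun i => (v (S i) - v i)).
  apply Rle_trans with (sumR 1 (M-1) (fun i => (e i * e i + e (i-1)%nat * e (i-1)%nat)/2 / h)).
  - apply sumR_le. intros i Hi.
    assert (Hs: S (i-1) = i) by lia.
    assert (E: (e i * e i + e (i - 1)%nat * e (i - 1)%nat) / 2 / h - h * grad h v i * grad h v i
               = (e i - e (i-1)%nat)^2 / (4*h)).
    { unfold e, grad. rewrite Hs. field. lra. }
    assert (0 <= (e i - e (i-1)%nat)^2 / (4*h)).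
    { unfold Rdiv. apply Rmult_le_pos. apply pow2_ge_0. left. apply Rinv_0_lt_compat. lra. }
    lra.
  - pose proof (sq_shift e (M-1)).
    unfold Rdiv. rewrite (sumR_ext 1 _ _ (fun i => /h * ((e i * e i + e (i - 1)%nat * e (i - 1)%nat) / 2))) by (intros; lra).
    rewrite (sumR_ext 0 _ _ (fun i => /h * (e i * e i))) by (intros; unfold e; lra).
    rewrite !sumR_scal. assert (0 < /h) by (apply Rinv_0_lt_compat; lra).
    assert (0 <= e 0%nat * e 0%nat + e (M-1)%nat * e (M-1)%nat) by nra. unfold Rdiv in H0. nra.
Qed.


End Grid.

Definition kap (t : nat -> R) k := 1 / bdf2 t k 0.
Definition eta (t : nat -> R) k := - bdf2 t k 1 / bdf2 t k 0.
Fixpoint cv (t : nat -> R) (g : nat -> R) (k : nat) : R :=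
  match k with 0 => 0 | S k' => kap t (S k') * g (S k') + eta t (S k') * cv t g k' end.

Lemma sum_parts : forall (P B0 B1 c : nat -> R), c 0%nat = 0 -> forall m,
  sumR 1 m (fun j => P j * (B0 j * c j + B1 j * c (j-1)%nat)) =
  sumR 1 m (fun k => c k * (P k * B0 k + P (S k) * B1 (S k))) - c m * P (S m) * B1 (S m).
Proof.
  intros. induction m.
  - rewrite !sumR_nil by lia. rewrite H. ring.
  - rewrite !sumR_S by lia. rewrite IHm. replace (S m - 1)%nat with m by lia. ring.
Qed.

Section TimeGrid.
Variable t : nat -> R.
Variable N : nat.
Hypothesis Hinc : forall k : nat, (1 <= k <= N)%nat -> t (k - 1)%nat < t k.

Lemma tau_pos : forall k, (1 <= k <= N)%nat -> 0 < tau t k.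
Proof. intros. unfold tau. pose proof (Hinc k H). lra. Qed.

Lemma ratio_pos : forall k, (2 <= k <= N)%nat -> 0 < ratio t k.
Proof. intros. unfold ratio. pose proof (tau_pos k ltac:(lia)). pose proof (tau_pos (k-1) ltac:(lia)).
  apply Rdiv_lt_0_compat; auto. Qed.

Lemma tau_ratio : forall k, (2 <= k <= N)%nat -> tau t k = ratio t k * tau t (k-1)%nat.
Proof. intros. unfold ratio. pose proof (tau_pos (k-1) ltac:(lia)). field. lra. Qed.

Lemma bdf2_1_0 : bdf2 t 1 0 = 1 / tau t 1. Proof. reflexivity. Qed.
Lemma bdf2_1_1 : bdf2 t 1 1 = 0. Proof. reflexivity. Qed.
Lemma bdf2_k_0 : forall k, (2 <= k)%nat -> bdf2 t k 0 = (1 + 2 * ratio t k) / (tau t k * (1 + ratio t k)).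
Proof. intros. unfold bdf2. destruct (Nat.eqb_spec k 1). lia. reflexivity. Qed.
Lemma bdf2_k_1 : forall k, (2 <= k)%nat -> bdf2 t k 1 = - (ratio t k ^ 2) / (tau t k * (1 + ratio t k)).
Proof. intros. unfold bdf2. destruct (Nat.eqb_spec k 1). lia. reflexivity. Qed.
Lemma bdf2_k_big : forall k j, (2 <= j)%nat -> bdf2 t k j = 0.
Proof. intros. unfold bdf2. destruct (Nat.eqb_spec k 1); destruct (Nat.eqb_spec j 0); try lia; auto.
  destruct (Nat.eqb_spec j 1); try lia; auto. Qed.

Lemma b0_pos : forall k, (1 <= k <= N)%nat -> 0 < bdf2 t k 0.
Proof.
  intros. pose proof (tau_pos k H). destruct (Nat.eq_dec k 1).
  - subst. rewrite bdf2_1_0. apply Rdiv_lt_0_compat; lra.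
  - rewrite bdf2_k_0 by lia. pose proof (ratio_pos k ltac:(lia)).
    apply Rdiv_lt_0_compat. lra. apply Rmult_lt_0_compat; lra.
Qed.

Lemma b1_nonpos : forall k, (1 <= k <= N)%nat -> bdf2 t k 1 <= 0.
Proof.
  intros. destruct (Nat.eq_dec k 1). subst. rewrite bdf2_1_1. lra.
  rewrite bdf2_k_1 by lia. pose proof (tau_pos k H). pose proof (ratio_pos k ltac:(lia)).
  assert (0 <= ratio t k ^ 2 / (tau t k * (1 + ratio t k))).
  { unfold Rdiv. apply Rmult_le_pos. apply pow2_ge_0. left. apply Rinv_0_lt_compat. nra. }
  replace (- (ratio t k ^ 2) / (tau t k * (1 + ratio t k))) with (- (ratio t k ^ 2 / (tau t k * (1 + ratio t k)))) by (field; nra).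
  lra.
Qed.

Lemma kap_pos : forall k, (1 <= k <= N)%nat -> 0 < kap t k.
Proof. intros. unfold kap. apply Rdiv_lt_0_compat. lra. apply b0_pos; auto. Qed.

Lemma eta_nonneg : forall k, (1 <= k <= N)%nat -> 0 <= eta t k.
Proof. intros. unfold eta. pose proof (b0_pos k H). pose proof (b1_nonpos k H).
  unfold Rdiv. apply Rmult_le_pos. lra. left. apply Rinv_0_lt_compat. lra. Qed.

Lemma eta_1 : eta t 1 = 0.
Proof. unfold eta. rewrite bdf2_1_1. unfold Rdiv. ring. Qed.

Lemma kap_eta_tau : forall k, (1 <= k <= N)%nat -> kap t k + eta t k * tau t (k-1)%nat = tau t k.
Proof.
  intros. pose proof (tau_pos k H). destruct (Nat.eq_dec k 1).
  - subst. rewrite eta_1. unfold kap. rewrite bdf2_1_0. field. lra.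
  - unfold kap, eta. rewrite bdf2_k_0, bdf2_k_1 by lia. pose proof (ratio_pos k ltac:(lia)).
    rewrite (tau_ratio k) by lia. pose proof (tau_pos (k-1) ltac:(lia)).
    field. repeat split; try lra; nra.
Qed.

Lemma kap_le_tau : forall k, (1 <= k <= N)%nat -> kap t k <= tau t k.
Proof.
  intros. rewrite <- (kap_eta_tau k H). pose proof (eta_nonneg k H).
  destruct (Nat.eq_dec k 1). subst. rewrite eta_1. lra.
  pose proof (tau_pos (k-1) ltac:(lia)). nra.
Qed.

Lemma eta_half : forall k, (1 <= k <= N)%nat -> eta t k * tau t (k-1)%nat <= tau t k / 2.
Proof.
  intros. pose proof (tau_pos k H). destruct (Nat.eq_dec k 1).
  - subst. rewrite eta_1. lra.
  - unfold eta. rewrite bdf2_k_0, bdf2_k_1 by lia. pose proof (ratio_pos k ltac:(lia)).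
    rewrite (tau_ratio k) by lia. pose proof (tau_pos (k-1) ltac:(lia)).
    set (r := ratio t k) in *. set (s := tau t (k-1)%nat) in *.
    match goal with |- ?L <= _ => replace L with (r*(r*s)/(1+2*r)) by (field; repeat split; nra) end.
    assert (E: r*(r*s)/(1+2*r) = r*s/2 - r*s/(2*(1+2*r))) by (field; lra).
    assert (0 <= r*s/(2*(1+2*r))) by (apply Rlt_le, Rdiv_lt_0_compat; nra). rewrite E. lra.
Qed.

Lemma cv_inv : forall g k, (1 <= k <= N)%nat -> g k = bdf2 t k 0 * cv t g k + bdf2 t k 1 * cv t g (k-1)%nat.
Proof.
  intros. destruct k. lia. simpl cv. rewrite ?Nat.sub_0_r. unfold kap, eta.
  pose proof (b0_pos (S k) H). field. lra.
Qed.

Lemma cv_lin : forall a b g1 g2 k, cv t (fun j => a * g1 j + b * g2 j) k = a * cv t g1 k + b * cv t g2 k.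
Proof. intros. induction k; simpl; [ring|]. rewrite IHk. ring. Qed.

Lemma cv_ext : forall g1 g2 k, (forall j, (1 <= j <= k)%nat -> g1 j = g2 j) -> cv t g1 k = cv t g2 k.
Proof. intros. induction k; simpl; auto. rewrite H by lia. rewrite IHk by (intros; apply H; lia). reflexivity. Qed.

Lemma cv_mono : forall g1 g2 k, (k <= N)%nat -> (forall j, (1 <= j <= k)%nat -> g1 j <= g2 j) -> cv t g1 k <= cv t g2 k.
Proof.
  intros. induction k; simpl. lra.
  pose proof (kap_pos (S k) ltac:(lia)). pose proof (eta_nonneg (S k) ltac:(lia)).
  assert (g1 (S k) <= g2 (S k)) by (apply H0; lia).
  assert (cv t g1 k <= cv t g2 k) by (apply IHk; [lia| intros; apply H0; lia]). nra.
Qed.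

Lemma cv_nonneg : forall g k, (k <= N)%nat -> (forall j, (1 <= j <= k)%nat -> 0 <= g j) -> 0 <= cv t g k.
Proof.
  intros. replace 0 with (cv t (fun _ => 0) k). apply cv_mono; auto.
  clear. induction k; simpl; auto. rewrite IHk. ring.
Qed.

Lemma cv_bound : forall g G k, (k <= N)%nat -> (forall j, (1 <= j <= k)%nat -> g j <= G) -> cv t g k <= tau t k * G.
Proof.
  intros. induction k; simpl.
  - unfold tau. simpl. lra.
  - pose proof (kap_pos (S k) ltac:(lia)). pose proof (eta_nonneg (S k) ltac:(lia)).
    pose proof (kap_eta_tau (S k) ltac:(lia)). replace (S k - 1)%nat with k in H3 by lia.
    assert (g (S k) <= G) by (apply H0; lia).
    destruct k.
    + simpl. rewrite eta_1. simpl in H3. rewrite eta_1 in H3. nra.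
    + assert (cv t g (S k) <= tau t (S k) * G) by (apply IHk; [lia| intros; apply H0; lia]). nra.
Qed.


Lemma cv_zero_before : forall g k, (forall j, (1 <= j <= k)%nat -> g j = 0) -> cv t g k = 0.
Proof. intros. induction k; simpl; auto. rewrite H by lia. rewrite IHk by (intros; apply H; lia). ring. Qed.

Definition ind (j : nat) : nat -> R := fun i => if Nat.eqb i j then 1 else 0.

Lemma sum_ind : forall f j m, (1 <= j <= m)%nat -> sumR 1 m (fun i => f i * ind j i) = f j.
Proof.
  intros. induction m. lia.
  rewrite sumR_S by lia. unfold ind at 2. destruct (Nat.eqb_spec (S m) j).
  - subst. rewrite sumR_zero. ring. intros. unfold ind. destruct (Nat.eqb_spec i (S m)). lia. ring.
  - rewrite IHm by lia. ring.
Qed.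

Lemma cv_tau : forall k, (k <= N)%nat -> cv t (fun _ => 1) k = tau t k.
Proof.
  intros. induction k; simpl. unfold tau; simpl; ring.
  rewrite IHk by lia. pose proof (kap_eta_tau (S k) ltac:(lia)). replace (S k - 1)%nat with k in H0 by lia. lra.
Qed.

Lemma sum_tau : forall m, (m <= N)%nat -> sumR 1 m (tau t) = t m - t 0%nat.
Proof. intros. induction m. rewrite sumR_nil by lia. ring. rewrite sumR_S by lia. rewrite IHm by lia.
  unfold tau. replace (S m - 1)%nat with m by lia. ring. Qed.

Variable p : nat -> nat -> R.
Hypothesis Hp : is_DCC t N p.

Lemma dcc_lt : forall m k, (1 <= k)%nat -> (k < m)%nat -> (m <= N)%nat ->
  p m (m-k)%nat * bdf2 t k 0 + p m (m - S k)%nat * bdf2 t (S k) 1 = 1.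
Proof.
  intros. pose proof (Hp m k ltac:(lia) ltac:(lia)) as E.
  rewrite sumR_first in E by lia. rewrite sumR_first in E by lia.
  rewrite (sumR_zero (S (S k))) in E. rewrite Nat.sub_diag in E. replace (S k - k)%nat with 1%nat in E by lia. lra.
  intros. rewrite bdf2_k_big by lia. ring.
Qed.

Lemma dcc_eq : forall m, (1 <= m <= N)%nat -> p m 0%nat * bdf2 t m 0 = 1.
Proof.
  intros. pose proof (Hp m m H ltac:(lia)) as E. rewrite sumR_first in E by lia.
  rewrite sumR_nil in E by lia. rewrite !Nat.sub_diag in E. lra.
Qed.

Lemma dcc_sum : forall g m, (1 <= m <= N)%nat -> sumR 1 m (cv t g) = sumR 1 m (fun j => p m (m-j)%nat * g j).
Proof.
  intros.
  rewrite (sumR_ext 1 m (fun j => p m (m-j)%nat * g j) (fun j => p m (m-j)%nat * (bdf2 t j 0 * cv t g j + bdf2 t j 1 * cv t g (j-1)%nat))).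
  2:{ intros. rewrite <- cv_inv by lia. reflexivity. }
  rewrite (sum_parts (fun j => p m (m-j)%nat) (fun j => bdf2 t j 0) (fun j => bdf2 t j 1) (cv t g) eq_refl m).
  destruct m. lia.
  rewrite !sumR_S by lia.
  rewrite (sumR_ext 1 m (fun k => cv t g k * (p (S m) (S m - k)%nat * bdf2 t k 0 + p (S m) (S m - S k)%nat * bdf2 t (S k) 1)) (cv t g)).
  2:{ intros. rewrite dcc_lt by lia. ring. }
  rewrite Nat.sub_diag. pose proof (dcc_eq (S m) H).
  set (X := p (S m) (S m - S (S m))%nat * bdf2 t (S (S m)) 1).
  assert (E: cv t g (S m) * (p (S m) 0%nat * bdf2 t (S m) 0 + X) - cv t g (S m) * p (S m) (S m - S (S m))%nat * bdf2 t (S (S m)) 1 = cv t g (S m)).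
  { unfold X. rewrite H0. ring. }
  lra.
Qed.

Lemma p_as_cv : forall m j, (1 <= j <= m)%nat -> (m <= N)%nat -> p m (m-j)%nat = sumR 1 m (cv t (ind j)).
Proof. intros. rewrite dcc_sum by lia. rewrite sum_ind by lia. reflexivity. Qed.

Lemma cv_ind_nonneg : forall j k, (k <= N)%nat -> 0 <= cv t (ind j) k.
Proof. intros. apply cv_nonneg; auto. intros jj _. unfold ind. destruct (Nat.eqb jj j); lra. Qed.

Lemma p_nonneg : forall m j, (1 <= j <= m)%nat -> (m <= N)%nat -> 0 <= p m (m-j)%nat.
Proof. intros. rewrite p_as_cv by lia. apply sumR_nonneg. intros. apply cv_ind_nonneg. lia. Qed.

Lemma sumR_mono_n : forall f m n, (m <= n)%nat -> (forall i, (1 <= i <= n)%nat -> 0 <= f i) -> sumR 1 m f <= sumR 1 n f.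
Proof.
  intros. induction n. replace m with 0%nat by lia. lra.
  destruct (Nat.eq_dec m (S n)). subst; lra.
  rewrite sumR_S by lia. assert (0 <= f (S n)) by (apply H0; lia).
  assert (sumR 1 m f <= sumR 1 n f) by (apply IHn; [lia| intros; apply H0; lia]). lra.
Qed.

Lemma p_mono : forall m n j, (1 <= j <= m)%nat -> (m <= n)%nat -> (n <= N)%nat -> p m (m-j)%nat <= p n (n-j)%nat.
Proof.
  intros. rewrite !p_as_cv by lia. apply sumR_mono_n; auto. intros. apply cv_ind_nonneg. lia.
Qed.

Lemma p_sum_tau : forall m, (1 <= m <= N)%nat -> sumR 1 m (fun j => p m (m-j)%nat) = t m - t 0%nat.
Proof.
  intros. rewrite (sumR_ext _ _ _ (fun j => p m (m-j)%nat * 1)) by (intros; ring).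
  rewrite <- dcc_sum by auto. rewrite (sumR_ext _ _ _ (tau t)). apply sum_tau; lia.
  intros. apply cv_tau. lia.
Qed.

Lemma p_le : forall T, (forall k, (1 <= k <= N)%nat -> tau t k <= T) ->
  forall m j, (1 <= j <= m)%nat -> (m <= N)%nat -> p m (m-j)%nat <= 2 * T.
Proof.
  intros T HT m j Hj Hm. rewrite p_as_cv by lia.
  assert (Inv: forall m, (1 <= m <= N)%nat -> sumR 1 m (cv t (ind j)) + cv t (ind j) m * T / tau t m <= 2 * T).
  { clear m Hj Hm. intros m Hm. induction m. lia.
    pose proof (tau_pos (S m) Hm) as Ht. pose proof (HT (S m) Hm) as HTm.
    pose proof (kap_pos (S m) Hm). pose proof (kap_le_tau (S m) Hm). pose proof (eta_nonneg (S m) Hm).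
    rewrite sumR_S by lia. simpl cv.
    destruct m.
    - simpl cv. rewrite sumR_nil by lia. rewrite eta_1. unfold ind. destruct (Nat.eqb_spec 1 j).
      + replace (kap t 1 * 1 + 0 * 0) with (kap t 1) by ring.
        assert (kap t 1 * T / tau t 1 <= T). { apply Rmult_le_reg_r with (tau t 1). lra. unfold Rdiv. rewrite Rmult_assoc, Rinv_l by lra. nra. }
        lra.
      + replace (0 + (kap t 1 * 0 + 0 * 0) * T / tau t 1) with 0 by (field; lra). assert (0 < T) by lra. lra.
    - specialize (IHm ltac:(lia)). pose proof (tau_pos (S m) ltac:(lia)) as Ht'.
      pose proof (eta_half (S (S m)) Hm) as He. replace (S (S m) - 1)%nat with (S m) in He by lia.
      pose proof (cv_ind_nonneg j (S m) ltac:(lia)) as Hc.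
      pose proof (HT (S m) ltac:(lia)).
      set (c := cv t (ind j) (S m)) in *. set (U := sumR 1 (S m) (cv t (ind j))) in *.
      set (e := eta t (S (S m))) in *. set (a := tau t (S m)) in *. set (b := tau t (S (S m))) in *.
      set (kk := kap t (S (S m))) in *.
      unfold ind. destruct (Nat.eqb_spec (S (S m)) j).
      + assert (c = 0). { unfold c. apply cv_zero_before. intros. unfold ind. destruct (Nat.eqb_spec j0 j); [lia|auto]. }
        assert (U = 0). { unfold U. apply sumR_zero. intros. apply cv_zero_before. intros. unfold ind. destruct (Nat.eqb_spec j0 j); [lia|auto]. }
        rewrite H3, H4. replace (0 + (kk * 1 + e * 0) + (kk * 1 + e * 0) * T / b) with (kk + kk * T / b) by (field; lra).
        assert (kk * T / b <= T). { apply Rmult_le_reg_r with b. lra. unfold Rdiv. rewrite Rmult_assoc, Rinv_l by lra. nra. }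
        lra.
      + replace (kk * 0 + e * c) with (e * c) by ring.
        assert (G1: U <= 2*T - c * T / a) by lra.
        assert (G2: e * c * T / b <= c * T / (2 * a)).
        { apply Rmult_le_reg_r with (2 * a * b). nra.
          replace (e * c * T / b * (2 * a * b)) with (2 * (e * a) * (c * T)) by (field; lra).
          replace (c * T / (2 * a) * (2 * a * b)) with (b * (c * T)) by (field; lra).
          assert (0 <= c * T) by nra. nra. }
        assert (G3: e * c <= c * T / (2 * a)).
        { apply Rmult_le_reg_r with (2 * a). lra.
          replace (c * T / (2 * a) * (2 * a)) with (c * T) by (field; lra). nra. }
        assert (c * T / (2*a) + c * T / (2*a) = c * T / a) by (field; lra). lra. }
  specialize (Inv m ltac:(lia)).
  assert (0 <= cv t (ind j) m * T / tau t m).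
  { pose proof (cv_ind_nonneg j m ltac:(lia)). pose proof (tau_pos m ltac:(lia)). pose proof (HT m ltac:(lia)).
    apply Rmult_le_pos. nra. left; apply Rinv_0_lt_compat; lra. }
  lra.
Qed.

End TimeGrid.

Lemma Kp_pol : forall S W, 2.2 < S < 2.21 -> S^3 = 2*S^2+1 -> 0 < W < S ->
  2*S*(S^2 - W^2)*(1+W^2) <= (2*(1+W^2) - W^3)*(1+S^2)^2.
Proof.
  intros S W HS HE HW.
  assert (Q: 34 <= (1+S^2)^2) by nra.
  assert (Q2: S^2 <= 4.9) by nra.
  assert (W2: 0 <= W^2) by nra.
  destruct (Rle_lt_dec W 1.5).
  - assert (2 + 0.5*W^2 <= 2*(1+W^2) - W^3).
    { assert (0 <= W^2 * (1.5 - W)) by (apply Rmult_le_pos; lra). nra. }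
    assert (2*S*(S^2 - W^2)*(1+W^2) <= 2*2.21*4.9*(1+W^2)).
    { apply Rmult_le_compat_r. lra. assert (S^2 - W^2 <= 4.9) by lra. assert (0 <= S^2 - W^2) by nra. nra. }
    nra.
  - destruct (Rle_lt_dec W 2).
    + assert (2 <= 2*(1+W^2) - W^3).
      { assert (0 <= W^2 * (2 - W)) by (apply Rmult_le_pos; lra). nra. }
      assert ((S^2 - W^2)*(1+W^2) <= 2.65*5).
      { assert (S^2 - W^2 <= 2.65) by nra. assert (0 <= S^2 - W^2) by nra. assert (1 + W^2 <= 5) by nra. nra. }
      assert (2*S*(S^2 - W^2)*(1+W^2) <= 2*2.21*(2.65*5)).
      { assert (0 <= (S^2 - W^2)*(1+W^2)) by (apply Rmult_le_pos; nra). 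
        replace (2*S*(S^2 - W^2)*(1+W^2)) with (2*S*((S^2 - W^2)*(1+W^2))) by ring. nra. }
      nra.
    + assert (1 <= 2*(1+W^2) - W^3).
      { assert (E: 2*(1+W^2) - W^3 - 1 = (S-W)*(S^2+S*W+W^2-2*S-2*W)) by nra.
        assert (0 <= S^2+S*W+W^2-2*S-2*W) by nra. assert (0 <= S - W) by lra. nra. }
      assert (S - W <= 0.21) by lra.
      assert (2*S*(S^2 - W^2)*(1+W^2) <= 2*S*(S-W)*(2*S)*(1+S^2)).
      { replace (2*S*(S^2 - W^2)*(1+W^2)) with ((2*S*(S-W))*((S+W)*(1+W^2))) by ring.
        replace (2*S*(S-W)*(2*S)*(1+S^2)) with ((2*S*(S-W))*((2*S)*(1+S^2))) by ring.
        apply Rmult_le_compat_l. nra. apply Rmult_le_compat; nra. }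
      assert (2*S*(S-W)*(2*S)*(1+S^2) <= 4*4.9*0.21*(1+S^2)).
      { replace (2*S*(S-W)*(2*S)*(1+S^2)) with ((4*S^2)*(S-W)*(1+S^2)) by ring.
        apply Rmult_le_compat_r. nra. apply Rmult_le_compat; nra. }
      assert (1+S^2 <= (1+S^2)^2) by nra. nra.
Qed.

Definition Fq (w : R) := (1+2*w^2)/(1+w^2) - w^3/(2*(1+w^2)).
Definition Ff (w : R) := w^3/(2*(1+w^2)).

Lemma Fq_small : forall w, 0 <= w <= 2 -> 1 <= Fq w.
Proof.
  intros. unfold Fq. assert (0 < 1 + w^2) by nra.
  assert (E: (1+2*w^2)/(1+w^2) - w^3/(2*(1+w^2)) - 1 = w^2*(2-w)/(2*(1+w^2))) by (field; lra).
  assert (0 <= w^2*(2-w)/(2*(1+w^2))). { apply Rmult_le_pos. apply Rmult_le_pos; nra. left; apply Rinv_0_lt_compat; lra. }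
  lra.
Qed.

Lemma Fq_mono : forall w W, 2 <= w <= W -> Fq W <= Fq w.
Proof.
  intros. unfold Fq. assert (0 < 1 + w^2) by nra. assert (0 < 1 + W^2) by nra.
  assert (E: (1+2*w^2)/(1+w^2) - w^3/(2*(1+w^2)) - ((1+2*W^2)/(1+W^2) - W^3/(2*(1+W^2)))
     = (W-w)*((W^2+W*w+w^2) + w^2*W^2 - 2*(W+w))/(2*(1+w^2)*(1+W^2))) by (field; lra).
  assert (0 <= (W^2+W*w+w^2) + w^2*W^2 - 2*(W+w)) by nra.
  assert (0 <= (W-w)*((W^2+W*w+w^2) + w^2*W^2 - 2*(W+w))/(2*(1+w^2)*(1+W^2))).
  { apply Rmult_le_pos. apply Rmult_le_pos; lra. left; apply Rinv_0_lt_compat; nra. }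
  lra.
Qed.

Lemma Ff_mono : forall w W, 0 <= w <= W -> Ff w <= Ff W.
Proof.
  intros. unfold Ff. assert (0 < 1 + w^2) by nra. assert (0 < 1 + W^2) by nra.
  assert (E: W^3/(2*(1+W^2)) - w^3/(2*(1+w^2)) = (W-w)*((W^2+W*w+w^2) + w^2*W^2)/(2*(1+w^2)*(1+W^2))) by (field; lra).
  assert (0 <= (W-w)*((W^2+W*w+w^2) + w^2*W^2)/(2*(1+w^2)*(1+W^2))).
  { apply Rmult_le_pos. apply Rmult_le_pos; nra. left; apply Rinv_0_lt_compat; nra. }
  lra.
Qed.

Lemma K_big : forall S W, 2.2 < S < 2.21 -> S^3 = 2*S^2+1 -> 2 <= W < S ->
  S*(S^2-W^2)/(2*(1+S^2)^2) <= Fq W - Ff W.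
Proof.
  intros. unfold Fq, Ff. assert (0 < 1 + W^2) by nra.
  assert (E: (1+2*W^2)/(1+W^2) - W^3/(2*(1+W^2)) - W^3/(2*(1+W^2)) = (S-W)*(S^2+S*W+W^2-2*S-2*W)/(1+W^2)).
  { apply Rmult_eq_reg_r with (1+W^2). 2: lra. field_simplify; try lra; try nra. }
  rewrite E.
  assert (X: (S+W)*(S-2) <= S^2+S*W+W^2-2*S-2*W) by nra.
  assert (Y: S <= 2*(S-2)*(1+S^2)) by nra.
  apply Rmult_le_reg_r with (2*(1+S^2)^2*(1+W^2)). nra.
  replace (S * (S ^ 2 - W ^ 2) / (2 * (1 + S ^ 2) ^ 2) * (2 * (1 + S ^ 2) ^ 2 * (1 + W ^ 2))) with (S*(S-W)*(S+W)*(1+W^2)) by (field; nra).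
  replace ((S - W) * (S ^ 2 + S * W + W ^ 2 - 2 * S - 2 * W) / (1 + W ^ 2) * (2 * (1 + S ^ 2) ^ 2 * (1 + W ^ 2)))
     with ((S - W) * (S ^ 2 + S * W + W ^ 2 - 2 * S - 2 * W) * (2 * (1 + S ^ 2) ^ 2)) by (field; nra).
  assert (0 <= S - W) by lra.
  assert (1 + W^2 <= 1 + S^2) by nra.
  assert (S*(S+W)*(1+W^2) <= (S^2 + S * W + W^2 - 2*S - 2*W) * (2*(1+S^2)^2)).
  { apply Rle_trans with (2*(S-2)*(1+S^2)*(S+W)*(1+S^2)).
    - assert (S*(S+W)*(1+W^2) <= S*(S+W)*(1+S^2)) by (apply Rmult_le_compat_l; nra).
      assert (S*(S+W)*(1+S^2) <= 2*(S-2)*(1+S^2)*(S+W)*(1+S^2)).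
      { replace (2*(S-2)*(1+S^2)*(S+W)*(1+S^2)) with ((2*(S-2)*(1+S^2))*((S+W)*(1+S^2))) by ring.
        replace (S*(S+W)*(1+S^2)) with (S*((S+W)*(1+S^2))) by ring. apply Rmult_le_compat_r; nra. }
      lra.
    - replace (2*(S-2)*(1+S^2)*(S+W)*(1+S^2)) with (((S+W)*(S-2))*(2*(1+S^2)^2)) by ring.
      apply Rmult_le_compat_r; nra. }
  replace (S*(S-W)*(S+W)*(1+W^2)) with ((S-W)*(S*(S+W)*(1+W^2))) by ring.
  replace ((S - W) * (S ^ 2 + S * W + W ^ 2 - 2 * S - 2 * W) * (2 * (1 + S ^ 2) ^ 2)) with ((S - W) * ((S ^ 2 + S * W + W ^ 2 - 2 * S - 2 * W) * (2 * (1 + S ^ 2) ^ 2))) by ring.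
  apply Rmult_le_compat_l; lra.
Qed.

Section Consts.
Variable rmax delta : R.
Hypothesis Hrmax_pos : 0 < rmax.
Hypothesis Hrmax_root : rmax ^ 3 = (2 * rmax + 1) ^ 2.
Hypothesis Hdelta : 0 < delta < rmax.

Let S := sqrt rmax.
Lemma S_sq : S^2 = rmax. Proof. unfold S. simpl. rewrite Rmult_1_r. apply sqrt_sqrt. lra. Qed.
Lemma S_pos : 0 < S. Proof. unfold S. apply sqrt_lt_R0. lra. Qed.
Lemma S_cubic : S^3 = 2*S^2+1.
Proof.
  pose proof S_sq. pose proof S_pos. rewrite <- H in Hrmax_root.
  assert (E: (S^3 - (2*S^2+1)) * (S^3 + (2*S^2+1)) = 0) by (ring_simplify; ring_simplify in Hrmax_root; nra).
  apply Rmult_integral in E. destruct E. lra. nra.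
Qed.
Lemma S_bounds : 2.2 < S < 2.21.
Proof. pose proof S_pos. pose proof S_cubic. split; nra. Qed.
Lemma rmax_bounds : 4.84 < rmax < 4.885.
Proof. rewrite <- S_sq. pose proof S_bounds. split; nra. Qed.

Definition Crc := sqrt rmax / (1 + rmax) ^ 2.

Lemma Crd_eq : forall W, 0 <= W -> W^2 = rmax - delta -> Crc * delta = S*(S^2-W^2)/(1+S^2)^2.
Proof. intros. unfold Crc. fold S. rewrite H0, S_sq. field. lra. Qed.

Lemma sqrt_pow2 : forall x, 0 <= x -> sqrt x ^ 2 = x.
Proof. intros. simpl. rewrite Rmult_1_r. apply sqrt_sqrt. auto. Qed.

Lemma Kp_main : Crc * delta <= 1 - Ff (sqrt (rmax - delta)).
Proof.
  set (W := sqrt (rmax - delta)). assert (HW2: W^2 = rmax - delta) by (apply sqrt_pow2; lra).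
  assert (0 < W) by (apply sqrt_lt_R0; lra).
  rewrite (Crd_eq W) by (auto; lra). pose proof S_bounds. pose proof S_cubic. pose proof S_sq.
  assert (W < S). { assert (W^2 < S^2) by lra. nra. }
  pose proof (Kp_pol S W H0 H1 ltac:(lra)).
  unfold Ff. assert (0 < 1 + W^2) by nra. assert (0 < (1+S^2)^2) by nra.
  assert (E1: S * (S ^ 2 - W ^ 2) / (1 + S ^ 2) ^ 2 = (2*S*(S^2 - W^2)*(1+W^2)) / (2*(1+W^2)*(1+S^2)^2)) by (field; lra).
  assert (E2: 1 - W ^ 3 / (2 * (1 + W ^ 2)) = ((2*(1+W^2) - W^3)*(1+S^2)^2) / (2*(1+W^2)*(1+S^2)^2)) by (field; lra).
  rewrite E1, E2. apply Rmult_le_compat_r. left; apply Rinv_0_lt_compat; nra. auto.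
Qed.

Lemma K_main : forall r, 0 < r <= rmax - delta ->
  Crc * delta / 2 <= (1 + 2*r)/(1 + r) - Ff (sqrt r) - Ff (sqrt (rmax - delta)).
Proof.
  intros r Hr.
  set (W := sqrt (rmax - delta)). assert (HW2: W^2 = rmax - delta) by (apply sqrt_pow2; lra).
  set (w := sqrt r). assert (Hw2: w^2 = r) by (apply sqrt_pow2; lra).
  assert (0 < W) by (apply sqrt_lt_R0; lra). assert (0 < w) by (apply sqrt_lt_R0; lra).
  assert (w <= W) by (apply sqrt_le_1_alt; lra).
  assert (Eq: (1 + 2*r)/(1 + r) - Ff w = Fq w) by (unfold Fq, Ff; rewrite Hw2; reflexivity).
  rewrite Eq. pose proof Kp_main. fold W in H2.
  assert (0 < Crc * delta). { unfold Crc. apply Rmult_lt_0_compat; [|lra]. apply Rdiv_lt_0_compat. apply sqrt_lt_R0; lra. nra. }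
  destruct (Rle_lt_dec w 2).
  - pose proof (Fq_small w ltac:(lra)). lra.
  - pose proof (Fq_mono w W ltac:(lra)).
    rewrite (Crd_eq W) by (auto; lra). pose proof S_bounds. pose proof S_cubic. pose proof S_sq.
    assert (W < S). { assert (W^2 < S^2) by lra. nra. }
    pose proof (K_big S W H5 H6 ltac:(lra)). assert (S * (S ^ 2 - W ^ 2) / (1 + S ^ 2) ^ 2 / 2 = S * (S ^ 2 - W ^ 2) / (2 * (1 + S ^ 2) ^ 2)) by (field; nra). lra.
Qed.

Lemma Ff_bound : Ff (sqrt (rmax - delta)) <= 1 - 1/(2*(1+rmax)).
Proof.
  pose proof (Ff_mono (sqrt (rmax - delta)) S). 
  assert (sqrt (rmax - delta) <= S) by (apply sqrt_le_1_alt; lra).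
  assert (0 <= sqrt (rmax - delta)) by apply sqrt_pos.
  specialize (H ltac:(lra)). unfold Ff at 2 in H.
  pose proof S_cubic. pose proof S_sq. rewrite H2, H3 in H.
  replace ((2 * rmax + 1) / (2 * (1 + rmax))) with (1 - 1 / (2 * (1 + rmax))) in H by (field; lra). auto.
Qed.

End Consts.

Lemma young3 : forall r tp y y', 0 < r -> 0 < tp -> 0 <= y -> 0 <= y' ->
  r^2/((r*tp)*(1+r)) * y * y' <= Ff (sqrt r) * (y^2/(r*tp) + y'^2/tp).
Proof.
  intros. set (w := sqrt r). assert (Hw2: w^2 = r) by (apply sqrt_pow2; lra).
  assert (0 < w) by (apply sqrt_lt_R0; lra). unfold Ff. rewrite <- Hw2.
  assert (E: w ^ 3 / (2 * (1 + w ^ 2)) * (y ^ 2 / (w ^ 2 * tp) + y' ^ 2 / tp) - (w ^ 2) ^ 2 / (w ^ 2 * tp * (1 + w ^ 2)) * y * y'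
    = w * (y - w*y')^2 / (2*(1+w^2)*tp)) by (field; repeat split; nra).
  assert (0 <= w * (y - w*y')^2 / (2*(1+w^2)*tp)).
  { apply Rmult_le_pos. apply Rmult_le_pos. lra. apply pow2_ge_0. left; apply Rinv_0_lt_compat. nra. }
  lra.
Qed.

Lemma Qbase : forall tau1 r y1 y2 sY nu mu fR,
  0 < tau1 -> 0 < r -> 0 <= y1 -> 0 <= y2 -> 0 < sY -> nu = r / (4 * sY) -> mu + fR <= 1 - sY ->
  y1 * y1 / tau1 + (1 + 2*r)/((r*tau1)*(1+r)) * (y2*y2) + (- r^2/((r*tau1)*(1+r))) * (y2 * y1)
  >= mu * (y2 * y2 / (r*tau1)) - nu * (y1 * y1 / tau1) + fR * (y2*y2/(r*tau1)).
Proof.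
  intros. subst nu.
  assert (A: 1 <= (1 + 2*r)/(1+r)). { apply Rmult_le_reg_r with (1+r). lra. unfold Rdiv. rewrite Rmult_assoc, Rinv_l by lra. lra. }
  assert (Bm: y2 * y1 <= sY * (y2*y2) / r + r * (y1*y1) / (4 * sY)).
  { assert (0 <= (2*sY*y2 - r*y1)^2) by apply pow2_ge_0.
    assert (E: sY * (y2*y2) / r + r * (y1*y1) / (4 * sY) - y2 * y1 = (2*sY*y2 - r*y1)^2 / (4*sY*r)) by (field; lra).
    assert (0 <= (2*sY*y2 - r*y1)^2 / (4*sY*r)) by (apply Rmult_le_pos; [auto| left; apply Rinv_0_lt_compat; nra]). lra. }
  assert (C: r/(1+r) * (y2 * y1) <= y2 * y1) by (assert (0 <= y2*y1) by nra; apply Rmult_le_reg_r with (1+r); [lra|];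
            replace (r / (1 + r) * (y2 * y1) * (1 + r)) with (r * (y2*y1)) by (field; lra); nra).
  assert (E1: (1 + 2*r)/((r*tau1)*(1+r)) * (y2*y2) = ((1 + 2*r)/(1+r)) * (y2*y2/(r*tau1))) by (field; lra).
  assert (E2: (- r^2/((r*tau1)*(1+r))) * (y2 * y1) = - (r/(1+r) * (y2*y1)) / tau1) by (field; lra).
  assert (E3: r / (4 * sY) * (y1 * y1 / tau1) = (r * (y1*y1) / (4 * sY)) / tau1) by (field; lra).
  assert (E4: y2 * y2 / (r * tau1) = (y2*y2/r) / tau1) by (field; lra).
  rewrite E1, E2, E3. rewrite E4.
  assert (0 <= y2*y2/r) by (apply Rmult_le_pos; [nra| left; apply Rinv_0_lt_compat; lra]).
  assert (0 <= y1*y1/tau1) by (apply Rmult_le_pos; [nra| left; apply Rinv_0_lt_compat; lra]).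
  set (Y := y2*y2/r) in *.
  assert (sY * (y2*y2) / r = sY * Y) by (unfold Y; field; lra).
  assert (D: - (r / (1 + r) * (y2 * y1)) / tau1 >= - (sY * Y + r * (y1 * y1) / (4 * sY)) / tau1).
  { unfold Rdiv. apply Rle_ge. apply Rmult_le_compat_r. left; apply Rinv_0_lt_compat; lra. lra. }
  assert (F1: (1 + 2 * r) / (1 + r) * (Y / tau1) >= (mu + fR + sY) * (Y/tau1)).
  { apply Rle_ge, Rmult_le_compat_r. apply Rmult_le_pos; [|left; apply Rinv_0_lt_compat; lra]. unfold Y. auto. lra. }
  assert (E5: - (sY * Y + r * (y1 * y1) / (4 * sY)) / tau1 = - sY * (Y/tau1) - r * (y1 * y1) / (4 * sY) / tau1) by (field; lra).
  assert (0 <= r * (y1 * y1) / (4 * sY) / tau1).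
  { apply Rmult_le_pos. apply Rmult_le_pos. nra. left; apply Rinv_0_lt_compat; lra. left; apply Rinv_0_lt_compat; lra. }
  nra.
Qed.

Lemma Qstep : forall r tp y ym F fR mu,
  0 < r -> 0 < tp -> 0 <= y -> 0 <= ym -> 0 <= F -> F <= fR ->
  r^2/((r*tp)*(1+r)) * y * ym <= F * (y^2/(r*tp) + ym^2/tp) ->
  mu <= (1 + 2*r)/(1+r) - F - fR ->
  (1 + 2*r)/((r*tp)*(1+r)) * (y*y) + (- r^2/((r*tp)*(1+r))) * (y * ym) + fR * (ym*ym/tp)
  >= (mu + fR) * (y * y / (r*tp)).
Proof.
  intros r tp y ym F fR mu Hr Htp Hy Hym HF HFR HY HK.
  assert (E1: (1 + 2*r)/((r*tp)*(1+r)) * (y*y) = ((1 + 2*r)/(1+r)) * (y*y/(r*tp))) by (field; lra).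
  assert (E2: (- r^2/((r*tp)*(1+r))) * (y * ym) = - (r^2/((r*tp)*(1+r)) * y * ym)) by (field; lra).
  rewrite E1, E2.
  assert (P1: 0 <= y*y/(r*tp)) by (apply Rmult_le_pos; [nra| left; apply Rinv_0_lt_compat; nra]).
  assert (P2: 0 <= ym*ym/tp) by (apply Rmult_le_pos; [nra| left; apply Rinv_0_lt_compat; nra]).
  replace (y^2) with (y*y) in HY by ring. replace (ym^2) with (ym*ym) in HY by ring.
  assert (F * (ym * ym / tp) <= fR * (ym*ym/tp)) by (apply Rmult_le_compat_r; auto).
  assert ((mu + fR) * (y * y / (r * tp)) <= ((1 + 2 * r) / (1 + r) - F) * (y * y / (r * tp))) by (apply Rmult_le_compat_r; auto; lra).
  nra.
Qed.


Lemma gronwall : forall (V tau : nat -> R) A lam n, 0 <= A -> 0 <= lam ->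
  (forall k, (1 <= k <= n)%nat -> 0 <= tau k /\ lam * tau k <= 1/2) ->
  (forall k, (k <= n)%nat -> 0 <= V k) ->
  (forall m, (1 <= m <= n)%nat -> V m <= A + lam * sumR 1 m (fun k => tau k * V k)) ->
  forall j, (S j <= n)%nat -> V (S j) <= 2 * A * exp (2 * lam * sumR 1 j tau).
Proof.
  intros V tau A lam n HA Hl Ht HV H.
  assert (C: forall j, (S j <= n)%nat -> A + lam * sumR 1 j (fun k => tau k * V k) <= A * exp (2 * lam * sumR 1 j tau)
                 /\ V (S j) <= 2 * (A + lam * sumR 1 j (fun k => tau k * V k))).
  { intros j. induction j; intros Hj.
    - rewrite !sumR_nil by lia. rewrite !Rmult_0_r, exp_0. split. lra.
      pose proof (H 1%nat ltac:(lia)). rewrite sumR_S in H0 by lia. rewrite sumR_nil in H0 by lia.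
      destruct (Ht 1%nat ltac:(lia)). pose proof (HV 1%nat ltac:(lia)).
      assert (lam * (tau 1%nat * V 1%nat) <= V 1%nat / 2) by nra. lra.
    - destruct (IHj ltac:(lia)) as [W1 V1].
      destruct (Ht (S j) ltac:(lia)) as [T1 T2].
      assert (W2: A + lam * sumR 1 (S j) (fun k => tau k * V k) <= A * exp (2 * lam * sumR 1 (S j) tau)).
      { rewrite !sumR_S by lia.
        replace (2 * lam * (sumR 1 j tau + tau (S j))) with (2 * lam * sumR 1 j tau + 2 * lam * tau (S j)) by ring.
        rewrite exp_plus. pose proof (exp_ineq1_le (2 * lam * tau (S j))).
        pose proof (HV (S j) ltac:(lia)).
        assert (0 <= A + lam * sumR 1 j (fun k => tau k * V k)).
        { assert (0 <= sumR 1 j (fun k => tau k * V k)). { apply sumR_nonneg. intros. destruct (Ht i ltac:(lia)). pose proof (HV i ltac:(lia)). nra. } nra. }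
        assert (lam * (tau (S j) * V (S j)) <= (A + lam * sumR 1 j (fun k => tau k * V k)) * (2 * lam * tau (S j))).
        { assert (0 <= lam * tau (S j)) by nra. nra. }
        assert (0 <= exp (2 * lam * sumR 1 j tau)) by (left; apply exp_pos).
        assert ((A + lam * sumR 1 j (fun k => tau k * V k)) * (1 + 2 * lam * tau (S j)) <= A * exp (2 * lam * sumR 1 j tau) * exp (2 * lam * tau (S j))).
        { apply Rmult_le_compat; try lra. assert (0 <= lam * tau (S j)) by nra. lra. }
        lra. }
      split; auto.
      pose proof (H (S (S j)) ltac:(lia)). rewrite sumR_S in H0 by lia.
      destruct (Ht (S (S j)) ltac:(lia)). pose proof (HV (S (S j)) Hj).
      assert (lam * (tau (S (S j)) * V (S (S j))) <= V (S (S j)) / 2) by nra. lra. }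
  intros j Hj. destruct (C j Hj). lra.
Qed.

Lemma fold_max_ge : forall (l : list R) d x, In x l -> x <= fold_right Rmax d l.
Proof.
  induction l; intros; simpl in *. contradiction.
  destruct H. subst. apply Rmax_l. eapply Rle_trans. apply IHl; eauto. apply Rmax_r.
Qed.

Lemma maxR_ge : forall f lo hi k, (lo <= k <= hi)%nat -> f k <= maxR lo hi f.
Proof.
  intros. unfold maxR. apply fold_max_ge. apply in_map. apply in_seq. lia.
Qed.

Lemma sqrt_add_le : forall x y, 0 <= x -> 0 <= y -> sqrt (x + y) <= sqrt x + sqrt y.
Proof.
  intros. pose proof (sqrt_pos x). pose proof (sqrt_pos y).
  rewrite <- (sqrt_square (sqrt x + sqrt y)) by lra. apply sqrt_le_1_alt.
  assert (sqrt x * sqrt x = x) by (apply sqrt_sqrt; auto). assert (sqrt y * sqrt y = y) by (apply sqrt_sqrt; auto).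
  nra.
Qed.

Lemma sqrt_le_sq : forall x y, 0 <= y -> x <= y * y -> sqrt x <= y.
Proof.
  intros. rewrite <- (sqrt_square y) by auto. apply sqrt_le_1_alt. auto.
Qed.

Section Main.
Variable N : nat.
Variable t : nat -> R.
Hypothesis Ht0 : t 0%nat = 0.
Hypothesis Hinc : forall k : nat, (1 <= k <= N)%nat -> t (k - 1)%nat < t k.
Variable M : nat.
Hypothesis HM : (2 <= M)%nat.
Variable xl xr : R.
Hypothesis Hx : xl < xr.
Variable c1 c2 c3 : R.
Hypothesis Hc1 : 0 < c1.
Variable rho : R -> R.
Variable CJ : R.
Hypothesis HCJ : 0 < CJ.
Hypothesis HJ : forall v : nat -> R, in_Vh M v ->
          nrm (hstep xl xr M) M (Jh rho xl xr M v) <= CJ * nrm (hstep xl xr M) M v.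
Variable phi zeta : nat -> nat -> R.
Hypothesis Hphi : forall n : nat, (n <= N)%nat -> in_Vh M (phi n).
Hypothesis Hscheme : forall n i : nat, (1 <= n <= N)%nat -> (1 <= i <= M - 1)%nat ->
     sumR 1 n (fun k => bdf2 t n (n - k)%nat * (phi k i - phi (k - 1)%nat i))
     - c1 * lapl (hstep xl xr M) (phi n) i
     + c2 * grad (hstep xl xr M) (phi n) i
     + c3 * phi n i
     + Jh rho xl xr M (Ephi t phi n) i
     = zeta n i.

Definition hh := hstep xl xr M.
Lemma hh_pos : 0 < hh.
Proof. unfold hh, hstep. apply Rdiv_lt_0_compat. lra. apply lt_0_INR. lia. Qed.

Definition Fv (k : nat) : nat -> R := fun i => zeta k i - Jh rho xl xr M (Ephi t phi k) i.
Definition dphi (k : nat) : nat -> R := fun i => phi k i - phi (k-1)%nat i.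
Definition psi (k : nat) : nat -> R := fun i => cv t (fun j => phi j i) k.
Definition Fpsi (k : nat) : nat -> R := fun i => cv t (fun j => Fv j i) k.

Lemma scheme2 : forall k i, (1 <= k <= N)%nat -> (1 <= i <= M - 1)%nat ->
  bdf2 t k 0 * dphi k i + bdf2 t k 1 * dphi (k-1)%nat i
  = Fv k i + c1 * lapl hh (phi k) i - c2 * grad hh (phi k) i - c3 * phi k i.
Proof.
  intros k i Hk Hi. pose proof (Hscheme k i Hk Hi) as E. unfold Fv, hh.
  assert (S: sumR 1 k (fun j => bdf2 t k (k - j)%nat * (phi j i - phi (j - 1)%nat i))
             = bdf2 t k 0 * dphi k i + bdf2 t k 1 * dphi (k-1)%nat i).
  { destruct k. lia. rewrite sumR_S by lia. rewrite Nat.sub_diag.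
    destruct k.
    - rewrite sumR_nil by lia. unfold dphi. simpl. rewrite bdf2_1_1. ring.
    - rewrite sumR_S by lia. replace (S (S k) - S k)%nat with 1%nat by lia.
      rewrite sumR_zero. unfold dphi. replace (S (S k) - 1)%nat with (S k) by lia. ring.
      intros. rewrite bdf2_k_big by lia. ring. }
  rewrite S in E. lra.
Qed.

Lemma lapl_comb : forall a b u v i, lapl hh (fun j => a * u j + b * v j) i = a * lapl hh u i + b * lapl hh v i.
Proof. intros. unfold lapl. pose proof hh_pos. field. lra. Qed.
Lemma grad_comb : forall a b u v i, grad hh (fun j => a * u j + b * v j) i = a * grad hh u i + b * grad hh v i.
Proof. intros. unfold grad. pose proof hh_pos. field. lra. Qed.

Lemma psi_S : forall k, psi (S k) = fun i => kap t (S k) * phi (S k) i + eta t (S k) * psi k i.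
Proof. reflexivity. Qed.
Lemma Fpsi_S : forall k, Fpsi (S k) = fun i => kap t (S k) * Fv (S k) i + eta t (S k) * Fpsi k i.
Proof. reflexivity. Qed.

Lemma dphi_psi : forall k i, (k <= N)%nat -> (1 <= i <= M - 1)%nat ->
  dphi k i = Fpsi k i + c1 * lapl hh (psi k) i - c2 * grad hh (psi k) i - c3 * psi k i.
Proof.
  intros k i Hk Hi. induction k.
  - unfold dphi, Fpsi, psi, lapl, grad. simpl. unfold Rdiv. ring.
  - rewrite psi_S, Fpsi_S. rewrite lapl_comb, grad_comb.
    pose proof (scheme2 (S k) i ltac:(lia) Hi) as E. replace (S k - 1)%nat with k in E by lia.
    pose proof (IHk ltac:(lia)) as IH.
    pose proof (b0_pos t N Hinc (S k) ltac:(lia)).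
    assert (K1: kap t (S k) * bdf2 t (S k) 0 = 1) by (unfold kap; field; lra).
    assert (K2: eta t (S k) = - kap t (S k) * bdf2 t (S k) 1) by (unfold kap, eta; field; lra).
    rewrite K2.
    replace (dphi (S k) i) with (kap t (S k) * (bdf2 t (S k) 0 * dphi (S k) i + bdf2 t (S k) 1 * dphi k i) - kap t (S k) * bdf2 t (S k) 1 * dphi k i).
    2:{ rewrite Rmult_plus_distr_l. rewrite <- Rmult_assoc, K1. ring. }
    rewrite E, IH. ring.
Qed.


Lemma psi_Vh : forall k, (k <= N)%nat -> in_Vh M (psi k).
Proof.
  intros. induction k.
  - unfold psi. split; reflexivity.
  - rewrite psi_S. apply in_Vh_comb. apply Hphi; auto. apply IHk; lia.
Qed.

Lemma ip_4 : forall A B C D w a b c, ip hh M (fun i => A i + a * B i - b * C i - c * D i) w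
  = ip hh M A w + a * ip hh M B w - b * ip hh M C w - c * ip hh M D w.
Proof.
  intros. unfold ip.
  rewrite (sumR_ext _ _ _ (fun i => hh * A i * w i + (a * (hh * B i * w i) + ((-b) * (hh * C i * w i) + (-c) * (hh * D i * w i))))) by (intros; ring).
  rewrite !sumR_plus, !sumR_scal. ring.
Qed.

Lemma ip_lapl : forall u w, ip hh M (lapl hh u) w = - aform hh M u w.
Proof.
  intros. unfold aform, ip.
  rewrite (sumR_ext _ _ (fun i => hh * - lapl hh u i * w i) (fun i => (-1) * (hh * lapl hh u i * w i))) by (intros; ring).
  rewrite sumR_scal. ring.
Qed.

Lemma decomp : forall k, (k <= N)%nat ->
  ip hh M (dphi k) (phi k) = ip hh M (Fpsi k) (phi k) - c1 * aform hh M (psi k) (phi k)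
     - c2 * ip hh M (grad hh (psi k)) (phi k) - c3 * ip hh M (psi k) (phi k).
Proof.
  intros. rewrite (ip_ext hh M (dphi k) (fun i => Fpsi k i + c1 * lapl hh (psi k) i - c2 * grad hh (psi k) i - c3 * psi k i) (phi k) (phi k)).
  - rewrite ip_4, ip_lapl. ring.
  - intros. split; auto. apply dphi_psi; auto.
Qed.

Lemma energy_step : forall k, 2 * ip hh M (dphi k) (phi k) >= ip hh M (phi k) (phi k) - ip hh M (phi (k-1)%nat) (phi (k-1)%nat).
Proof.
  intros. pose proof (ip_pos hh M hh_pos (dphi k)).
  assert (E1: ip hh M (dphi k) (phi k) = ip hh M (phi k) (phi k) - ip hh M (phi (k-1)%nat) (phi k)).
  { rewrite (ip_ext hh M (dphi k) (fun i => 1 * phi k i + (-1) * phi (k-1)%nat i) (phi k) (phi k)).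
    rewrite ip_lin. ring. intros; split; unfold dphi; auto; ring. }
  assert (E2: ip hh M (dphi k) (dphi k) = ip hh M (phi k) (phi k) - 2 * ip hh M (phi (k-1)%nat) (phi k) + ip hh M (phi (k-1)%nat) (phi (k-1)%nat)).
  { rewrite (ip_ext hh M (dphi k) (fun i => 1 * phi k i + (-1) * phi (k-1)%nat i) (dphi k) (fun i => 1 * phi k i + (-1) * phi (k-1)%nat i)).
    rewrite ip_lin. rewrite !(ip_sym hh M _ (fun i => 1 * phi k i + (-1) * phi (k-1)%nat i)). rewrite !ip_lin.
    rewrite (ip_sym hh M (phi k) (phi (k-1)%nat)). ring. intros; split; unfold dphi; ring. }
  lra.
Qed.

Lemma energy_tel : forall m, ip hh M (phi m) (phi m) - ip hh M (phi 0%nat) (phi 0%nat) <= sumR 1 m (fun k => 2 * ip hh M (dphi k) (phi k)).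
Proof.
  intros. induction m.
  - rewrite sumR_nil by lia. lra.
  - rewrite sumR_S by lia. pose proof (energy_step (S m)). replace (S m - 1)%nat with m in H by lia. lra.
Qed.


Lemma neg_mul_abs : forall c x B, Rabs x <= B -> - c * x <= Rabs c * B.
Proof.
  intros. apply Rle_trans with (Rabs (- c * x)). apply Rle_abs.
  rewrite Rabs_mult, Rabs_Ropp. apply Rmult_le_compat_l. apply Rabs_pos. auto.
Qed.

Definition nk (k : nat) := nrm hh M (phi k).
Fixpoint Vm (k : nat) : R := match k with 0 => nk 0 | S k' => Rmax (Vm k') (nk (S k')) end.

Lemma Vm_mono : forall j k, (j <= k)%nat -> Vm j <= Vm k.
Proof. intros. induction H. lra. simpl. apply Rle_trans with (Vm m). auto. apply Rmax_l. Qed.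
Lemma Vm_ge : forall j k, (j <= k)%nat -> nk j <= Vm k.
Proof. intros. apply Rle_trans with (Vm j). destruct j; simpl. lra. apply Rmax_r. apply Vm_mono; auto. Qed.
Lemma nk_nonneg : forall k, 0 <= nk k.
Proof. intros; apply nrm_nonneg. Qed.
Lemma Vm_nonneg : forall k, 0 <= Vm k.
Proof. intros. apply Rle_trans with (nk 0). apply nk_nonneg. apply Vm_ge. lia. Qed.

Lemma nrm_zero : nrm hh M (fun _ => 0) = 0.
Proof. unfold nrm, ip. rewrite sumR_zero. apply sqrt_0. intros; ring. Qed.

Lemma nrm_cv : forall (g : nat -> nat -> R) k, (k <= N)%nat ->
  nrm hh M (fun i => cv t (fun j => g j i) k) <= cv t (fun j => nrm hh M (g j)) k.
Proof.
  intros. induction k.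
  - simpl. rewrite nrm_zero. lra.
  - simpl. pose proof (kap_pos t N Hinc (S k) ltac:(lia)). pose proof (eta_nonneg t N Hinc (S k) ltac:(lia)).
    eapply Rle_trans. apply (nrm_comb hh M hh_pos (kap t (S k)) (eta t (S k)) (g (S k)) (fun i => cv t (fun j => g j i) k)).
    rewrite !Rabs_right by lra. specialize (IHk ltac:(lia)). nra.
Qed.

Lemma psi_bound : forall k, (k <= N)%nat -> nrm hh M (psi k) <= tau t k * Vm k.
Proof.
  intros. unfold psi. eapply Rle_trans. apply (nrm_cv phi k H).
  apply cv_bound with (N := N); auto. intros. apply Vm_ge. lia.
Qed.

Definition fs (k : nat) := cv t (fun j => nrm hh M (Fv j)) k.
Definition yk (k : nat) := sqrt (aform hh M (psi k) (psi k)).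

Lemma yk_nonneg : forall k, 0 <= yk k.
Proof. intros; apply sqrt_pos. Qed.

Lemma yk_sq : forall k, (k <= N)%nat -> yk k * yk k = aform hh M (psi k) (psi k).
Proof. intros. unfold yk. apply sqrt_sqrt. apply a_pos; auto. apply hh_pos. apply psi_Vh; auto. Qed.

Lemma aform_r_lin : forall u a b v w, aform hh M u (fun i => a * v i + b * w i) = a * aform hh M u v + b * aform hh M u w.
Proof.
  intros. unfold aform. rewrite ip_sym, ip_lin, !(ip_sym hh M _ (fun i => - lapl hh u i)). ring.
Qed.

Lemma ip_r_lin : forall u a b v w, ip hh M u (fun i => a * v i + b * w i) = a * ip hh M u v + b * ip hh M u w.
Proof. intros. rewrite ip_sym, ip_lin, !(ip_sym hh M u). ring. Qed.

Lemma per_k : forall k, (1 <= k <= N)%nat ->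
  2 * ip hh M (dphi k) (phi k) <=
    2 * fs k * nk k - 2 * c1 * (bdf2 t k 0 * (yk k * yk k) + bdf2 t k 1 * (yk k * yk (k-1)%nat))
    + (if Nat.leb 2 k then 2 * Rabs c2 * yk k * nk k else 0)
    + 2 * Rabs c3 * (tau t k * Vm k) * nk k.
Proof.
  intros k Hk. rewrite decomp by lia.
  assert (Ha: ip hh M (Fpsi k) (phi k) <= fs k * nk k).
  { eapply Rle_trans. apply ip_le. apply hh_pos. apply Rmult_le_compat_r. apply nk_nonneg.
    unfold Fpsi, fs. apply nrm_cv. lia. }
  assert (Hb: bdf2 t k 0 * (yk k * yk k) + bdf2 t k 1 * (yk k * yk (k-1)%nat) <= aform hh M (psi k) (phi k)).
  { unfold aform. rewrite (ip_ext hh M (fun i => - lapl hh (psi k) i) (fun i => - lapl hh (psi k) i) (phi k) (fun i => bdf2 t k 0 * psi k i + bdf2 t k 1 * psi (k-1)%nat i)).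
    2:{ intros. split; auto. unfold psi. apply (cv_inv t N Hinc (fun j => phi j i) k Hk). }
    fold (aform hh M (psi k) (fun i => bdf2 t k 0 * psi k i + bdf2 t k 1 * psi (k-1)%nat i)).
    rewrite aform_r_lin. rewrite yk_sq by lia.
    pose proof (a_CS hh M hh_pos HM (psi k) (psi (k-1)%nat) (psi_Vh k ltac:(lia)) (psi_Vh (k-1) ltac:(lia))).
    fold (yk k) in H. fold (yk (k-1)%nat) in H.
    pose proof (b1_nonpos t N Hinc k Hk). pose proof (Rle_abs (aform hh M (psi k) (psi (k-1)%nat))).
    nra. }
  assert (Hc: - c2 * ip hh M (grad hh (psi k)) (phi k) <= (if Nat.leb 2 k then Rabs c2 * yk k * nk k else 0)).
  { destruct (Nat.leb_spec 2 k).
    - rewrite Rmult_assoc. apply neg_mul_abs. eapply Rle_trans. apply ip_CS. apply hh_pos.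
      apply Rmult_le_compat_r. apply nk_nonneg. unfold nrm, yk. apply sqrt_le_1_alt.
      apply grad_bound; auto. apply hh_pos. apply psi_Vh; lia.
    - replace k with 1%nat by lia.
      rewrite (ip_ext hh M (grad hh (psi 1)) (fun i => kap t 1 * grad hh (phi 1%nat) i + eta t 1 * grad hh (psi 0%nat) i) (phi 1%nat) (phi 1%nat)).
      2:{ intros. split; auto. rewrite psi_S. apply grad_comb. }
      rewrite ip_lin, grad_skew; auto. rewrite (eta_1 t). lra. apply hh_pos. apply Hphi. lia. }
  assert (Hd: - c3 * ip hh M (psi k) (phi k) <= Rabs c3 * (tau t k * Vm k * nk k)).
  { apply neg_mul_abs. eapply Rle_trans. apply ip_CS. apply hh_pos.
    apply Rmult_le_compat_r. apply nk_nonneg. apply psi_bound. lia. }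
  destruct (Nat.leb 2 k); nra.
Qed.


Variable rmax delta : R.
Hypothesis Hrmax_pos : 0 < rmax.
Hypothesis Hrmax_root : rmax ^ 3 = (2 * rmax + 1) ^ 2.
Hypothesis Hdelta : 0 < delta < rmax.
Hypothesis Hrk : forall k : nat, (3 <= k <= N)%nat -> 0 < ratio t k <= rmax - delta.

Definition fR := Ff (sqrt (rmax - delta)).
Definition mu := Crc rmax * delta / 2.
Definition sY := (1 - fR) / 2.
Definition nu := ratio t 2 / (4 * sY).

Lemma fR_nonneg : 0 <= fR.
Proof. unfold fR, Ff. pose proof (sqrt_pos (rmax - delta)). apply Rmult_le_pos. apply pow_le; auto.
  left. apply Rinv_0_lt_compat. nra. Qed.

Lemma Crc_pos : 0 < Crc rmax.
Proof. unfold Crc. apply Rdiv_lt_0_compat. apply sqrt_lt_R0; lra. apply pow_lt; lra. Qed.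

Lemma mu_pos : 0 < mu.
Proof. unfold mu. pose proof Crc_pos. apply Rdiv_lt_0_compat. nra. lra. Qed.

Lemma sY_ge : 1 / (4 * (1 + rmax)) <= sY.
Proof. unfold sY, fR. pose proof (Ff_bound rmax delta Hrmax_pos Hrmax_root Hdelta).
  assert (1 / (4 * (1 + rmax)) = (1 / (2 * (1 + rmax)))/2) by (field; lra). lra. Qed.

Lemma sY_pos : 0 < sY.
Proof. pose proof sY_ge. assert (0 < 1 / (4 * (1 + rmax))) by (apply Rdiv_lt_0_compat; lra). lra. Qed.

Lemma mu_fR_sY : mu + fR <= 1 - sY.
Proof. unfold mu, sY. pose proof (Kp_main rmax delta Hrmax_pos Hrmax_root Hdelta). fold fR in H. lra. Qed.

Definition Qs (y : nat -> R) (m : nat) := sumR 1 m (fun k => bdf2 t k 0 * (y k * y k) + bdf2 t k 1 * (y k * y (k-1)%nat)).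
Definition Ms (y : nat -> R) (m : nat) := sumR 1 m (fun k => if Nat.leb 2 k then y k * y k / tau t k else 0).

Lemma Q_bound : forall (y : nat -> R) m, (2 <= N)%nat -> (1 <= m <= N)%nat -> (forall k, 0 <= y k) ->
  Qs y m >= mu * Ms y m - nu * (y 1%nat * y 1%nat / tau t 1).
Proof.
  intros y m HN Hm Hy.
  pose proof (tau_pos t N Hinc 1 ltac:(lia)) as T1.
  pose proof (ratio_pos t N Hinc 2 ltac:(lia)) as R2.
  pose proof sY_pos. pose proof mu_pos. pose proof fR_nonneg.
  assert (nu_nn : 0 <= nu). { unfold nu. apply Rlt_le, Rdiv_lt_0_compat; lra. }
  assert (Inv: forall m, (2 <= m <= N)%nat -> Qs y m >= mu * Ms y m - nu * (y 1%nat * y 1%nat / tau t 1) + fR * (y m * y m / tau t m)).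
  { clear m Hm. intros m Hm. induction m. lia.
    destruct (Nat.eq_dec m 1).
    - subst m. unfold Qs, Ms. rewrite !sumR_S by lia. rewrite !sumR_nil by lia. simpl Nat.leb. cbv iota.
      rewrite bdf2_1_1, bdf2_1_0. rewrite bdf2_k_0, bdf2_k_1 by lia.
      rewrite (tau_ratio t N Hinc 2) by lia. simpl (2-1)%nat.
      pose proof (Qbase (tau t 1) (ratio t 2) (y 1%nat) (y 2%nat) sY nu mu fR T1 R2 (Hy _) (Hy _) H eq_refl mu_fR_sY).
      replace (1 / tau t 1 * (y 1%nat * y 1%nat)) with (y 1%nat * y 1%nat / tau t 1) by (field; lra).
      lra.
    - specialize (IHm ltac:(lia)). unfold Qs, Ms in *. rewrite !sumR_S by lia.
      replace (Nat.leb 2 (S m)) with true by (symmetry; apply Nat.leb_le; lia).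
      rewrite bdf2_k_0, bdf2_k_1 by lia. replace (S m - 1)%nat with m by lia.
      pose proof (Hrk (S m) ltac:(lia)) as Hr. set (r := ratio t (S m)) in *.
      pose proof (tau_pos t N Hinc m ltac:(lia)) as Tm.
      rewrite (tau_ratio t N Hinc (S m)) by lia. replace (S m - 1)%nat with m by lia. fold r.
      assert (HF: Ff (sqrt r) <= fR). { unfold fR. apply Ff_mono. split. apply sqrt_pos. apply sqrt_le_1_alt. lra. }
      assert (HF0: 0 <= Ff (sqrt r)). { unfold Ff. pose proof (sqrt_pos r). apply Rmult_le_pos. apply pow_le; auto. left. apply Rinv_0_lt_compat. nra. }
      pose proof (young3 r (tau t m) (y (S m)) (y m) ltac:(lra) Tm (Hy _) (Hy _)).
      pose proof (K_main rmax delta Hrmax_pos Hrmax_root Hdelta r Hr). fold fR in H3.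
      pose proof (Qstep r (tau t m) (y (S m)) (y m) (Ff (sqrt r)) fR mu ltac:(lra) Tm (Hy _) (Hy _) HF0 HF H2 ltac:(unfold mu; lra)).
      replace (y (S m) * y (S m) / (r * tau t m)) with (y (S m) * y (S m) / (r * tau t m)) by reflexivity.
      nra. }
  destruct (Nat.eq_dec m 1).
  - subst. unfold Qs, Ms. rewrite !sumR_S by lia. rewrite !sumR_nil by lia. simpl Nat.leb. cbv iota.
    rewrite bdf2_1_1, bdf2_1_0.
    assert (0 <= y 1%nat * y 1%nat / tau t 1) by (apply Rmult_le_pos; [nra| left; apply Rinv_0_lt_compat; lra]).
    replace (1 / tau t 1 * (y 1%nat * y 1%nat)) with (y 1%nat * y 1%nat / tau t 1) by (field; lra). nra.
  - pose proof (Inv m ltac:(lia)). pose proof (tau_pos t N Hinc m ltac:(lia)).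
    assert (0 <= fR * (y m * y m / tau t m)). { apply Rmult_le_pos; auto. apply Rmult_le_pos. nra. left; apply Rinv_0_lt_compat; lra. }
    lra.
Qed.


Lemma fs_nonneg : forall k, (k <= N)%nat -> 0 <= fs k.
Proof. intros. unfold fs. apply cv_nonneg with (N := N); auto. intros. apply nrm_nonneg. Qed.

Lemma young_X : forall X c y n, 0 < X -> 2 * Rabs c * y * n <= X * (y*y) + c^2 * (n*n) / X.
Proof.
  intros. assert (0 <= (X*y - Rabs c * n)^2) by apply pow2_ge_0.
  assert (c^2 = Rabs c * Rabs c) by (rewrite <- Rabs_mult; rewrite Rabs_right; [ring| nra]).
  assert (E: X * (y*y) + c^2 * (n*n) / X - 2 * Rabs c * y * n = (X*y - Rabs c * n)^2 / X) by (rewrite H1; field; lra).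
  assert (0 <= (X*y - Rabs c * n)^2 / X) by (apply Rmult_le_pos; auto; left; apply Rinv_0_lt_compat; auto). lra.
Qed.

Definition lam' := c2^2/(2*c1*mu) + 2 * Rabs c3.
Definition Bm (m : nat) := 2 * sumR 1 m fs + lam' * sumR 1 m (fun k => tau t k * Vm k).
Definition a11 := aform hh M (phi 1%nat) (phi 1%nat).



Lemma level_ineq : forall m, (2 <= N)%nat -> (1 <= m <= N)%nat ->
  nk m * nk m <= nk 0 * nk 0 + 2 * c1 * nu * tau t 1 * a11 + Vm m * Bm m.
Proof.
  intros m HN Hm.
  pose proof (tau_pos t N Hinc 1 ltac:(lia)) as T1.
  pose proof mu_pos as Hmu.
  assert (nu_nn : 0 <= nu). { unfold nu. pose proof (ratio_pos t N Hinc 2 ltac:(lia)). pose proof sY_pos. apply Rlt_le, Rdiv_lt_0_compat; lra. }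
  pose proof (energy_tel m) as E. unfold nk. rewrite !nrm_sq by apply hh_pos.
  eapply Rle_trans with (ip hh M (phi 0%nat) (phi 0%nat) + sumR 1 m (fun k => 2 * ip hh M (dphi k) (phi k))). lra.
  clear E.
  eapply Rle_trans with (ip hh M (phi 0%nat) (phi 0%nat) + sumR 1 m (fun k =>
    2 * fs k * nk k - 2 * c1 * (bdf2 t k 0 * (yk k * yk k) + bdf2 t k 1 * (yk k * yk (k-1)%nat))
    + (if Nat.leb 2 k then 2 * Rabs c2 * yk k * nk k else 0)
    + 2 * Rabs c3 * (tau t k * Vm k) * nk k)).
  { apply Rplus_le_compat_l. apply sumR_le. intros. apply per_k. lia. }
  rewrite (sumR_ext _ _ _ (fun k => (2 * fs k * nk k + (if Nat.leb 2 k then 2 * Rabs c2 * yk k * nk k else 0)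
    + 2 * Rabs c3 * (tau t k * Vm k) * nk k) + (-2 * c1) * (bdf2 t k 0 * (yk k * yk k) + bdf2 t k 1 * (yk k * yk (k-1)%nat)))) by (intros; ring).
  rewrite sumR_plus, sumR_scal. fold (Qs yk m).
  pose proof (Q_bound yk m HN Hm yk_nonneg) as QB.
  assert (Y: sumR 1 m (fun k => 2 * fs k * nk k + (if Nat.leb 2 k then 2 * Rabs c2 * yk k * nk k else 0) + 2 * Rabs c3 * (tau t k * Vm k) * nk k)
     <= 2 * c1 * mu * Ms yk m + Vm m * Bm m).
  { unfold Ms, Bm. rewrite <- sumR_scal.
    rewrite <- (sumR_scal 1 m lam'), <- (sumR_scal 1 m 2), <- sumR_plus, Rmult_comm, <- sumR_scal, <- sumR_plus.
    apply sumR_le. intros k Hk.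
    pose proof (tau_pos t N Hinc k ltac:(lia)) as Tk.
    pose proof (Vm_ge k m ltac:(lia)). pose proof (Vm_ge k k ltac:(lia)). pose proof (nk_nonneg k).
    pose proof (fs_nonneg k ltac:(lia)). pose proof (Vm_nonneg k). pose proof (Vm_nonneg m).
    assert (F1: 2 * fs k * nk k <= Vm m * (2 * fs k)) by nra.
    assert (F3: 2 * Rabs c3 * (tau t k * Vm k) * nk k <= Vm m * (2 * Rabs c3 * (tau t k * Vm k))).
    { pose proof (Rabs_pos c3). assert (0 <= 2 * Rabs c3 * (tau t k * Vm k)).
      { apply Rmult_le_pos. lra. apply Rmult_le_pos; lra. }
      rewrite (Rmult_comm (Vm m)). apply Rmult_le_compat_l; auto. }
    assert (F2: (if Nat.leb 2 k then 2 * Rabs c2 * yk k * nk k else 0) <= 2 * c1 * mu * (if Nat.leb 2 k then yk k * yk k / tau t k else 0)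
       + Vm m * (c2^2/(2*c1*mu) * (tau t k * Vm k))).
    { assert (0 <= Vm m * (c2^2/(2*c1*mu) * (tau t k * Vm k))).
      { apply Rmult_le_pos; auto. apply Rmult_le_pos. apply Rmult_le_pos. apply pow2_ge_0. left; apply Rinv_0_lt_compat; nra. nra. }
      destruct (Nat.leb 2 k); cbv iota. 2: lra.
      pose proof (young_X (2*c1*mu/tau t k) c2 (yk k) (nk k) ltac:(apply Rdiv_lt_0_compat; nra)) as YX.
      replace (c2 ^ 2 * (nk k * nk k) / (2 * c1 * mu / tau t k)) with (c2^2/(2*c1*mu) * (tau t k * (nk k * nk k))) in YX by (field; lra).
      replace (2 * c1 * mu / tau t k * (yk k * yk k)) with (2 * c1 * mu * (yk k * yk k / tau t k)) in YX by (field; lra).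
      assert (c2^2/(2*c1*mu) * (tau t k * (nk k * nk k)) <= Vm m * (c2^2/(2*c1*mu) * (tau t k * Vm k))).
      { replace (Vm m * (c2^2/(2*c1*mu) * (tau t k * Vm k))) with (c2^2/(2*c1*mu) * (tau t k * (Vm k * Vm m))) by ring.
        apply Rmult_le_compat_l. apply Rmult_le_pos. apply pow2_ge_0. left; apply Rinv_0_lt_compat; nra.
        apply Rmult_le_compat_l. lra. apply Rmult_le_compat; auto. }
      lra. }
    unfold lam'. destruct (Nat.leb 2 k); cbv iota in *; lra. }
  assert (Y1: yk 1 * yk 1 / tau t 1 = tau t 1 * a11).
  { rewrite yk_sq by lia. rewrite psi_S. unfold a11.
    rewrite a_lin by apply hh_pos. rewrite !aform_r_lin. rewrite (eta_1 t).
    unfold kap. rewrite bdf2_1_0. field. lra. }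
  rewrite Y1 in QB.
  assert (QB2: 2 * c1 * (mu * Ms yk m - nu * (tau t 1 * a11)) <= 2 * c1 * Qs yk m).
  { apply Rmult_le_compat_l. lra. lra. }
  lra.
Qed.


Lemma quad_root : forall x a B, 0 <= x -> 0 <= a -> 0 <= B -> x * x <= a * a + x * B -> x <= a + B.
Proof. intros. destruct (Rle_lt_dec x (a + B)); auto. nra. Qed.

Lemma lam'_nonneg : 0 <= lam'.
Proof. unfold lam'. pose proof mu_pos. pose proof (Rabs_pos c3).
  assert (0 <= c2^2/(2*c1*mu)) by (apply Rmult_le_pos; [apply pow2_ge_0| left; apply Rinv_0_lt_compat; nra]). lra. Qed.

Lemma Bm_mono : forall m, (S m <= N)%nat -> Bm m <= Bm (S m).
Proof.
  intros. unfold Bm. rewrite !sumR_S by lia. pose proof (fs_nonneg (S m) H). pose proof lam'_nonneg.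
  pose proof (tau_pos t N Hinc (S m) ltac:(lia)). pose proof (Vm_nonneg (S m)). assert (0 <= lam' * (tau t (S m) * Vm (S m))) by (apply Rmult_le_pos; auto; apply Rmult_le_pos; lra). lra.
Qed.

Lemma a11_nonneg : (1 <= N)%nat -> 0 <= a11.
Proof. intros. unfold a11. apply a_pos. apply hh_pos. auto. apply Hphi. lia. Qed.

Definition aa := sqrt (nk 0 * nk 0 + 2 * c1 * nu * tau t 1 * a11).

Lemma V_bound : forall m, (2 <= N)%nat -> (m <= N)%nat -> Vm m <= aa + Bm m.
Proof.
  intros m HN Hm.
  assert (nu_nn : 0 <= nu). { unfold nu. pose proof (ratio_pos t N Hinc 2 ltac:(lia)). pose proof sY_pos. apply Rlt_le, Rdiv_lt_0_compat; lra. }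
  pose proof (tau_pos t N Hinc 1 ltac:(lia)). pose proof (a11_nonneg ltac:(lia)).
  assert (Q: 0 <= 2 * c1 * nu * tau t 1 * a11).
  { apply Rmult_le_pos; auto. apply Rmult_le_pos; try lra. apply Rmult_le_pos; lra. }
  pose proof (nk_nonneg 0).
  assert (Aa: 0 <= aa) by apply sqrt_pos.
  assert (Asq: aa * aa = nk 0 * nk 0 + 2 * c1 * nu * tau t 1 * a11) by (apply sqrt_sqrt; nra).
  assert (Bnn: forall m0, (m0 <= N)%nat -> 0 <= Bm m0).
  { intros m0 l. unfold Bm.
    - pose proof lam'_nonneg.
      assert (0 <= sumR 1 m0 fs) by (apply sumR_nonneg; intros; apply fs_nonneg; lia).
      assert (0 <= sumR 1 m0 (fun k => tau t k * Vm k)).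
      { apply sumR_nonneg; intros. apply Rmult_le_pos. left; apply (tau_pos t N Hinc); lia. apply Vm_nonneg. }
      assert (0 <= lam' * sumR 1 m0 (fun k => tau t k * Vm k)) by (apply Rmult_le_pos; auto). lra. }
  induction m.
  - change (Vm 0) with (nk 0). assert (nk 0 <= aa).
    { unfold aa. assert (E: nk 0 = sqrt (nk 0 * nk 0)) by (rewrite sqrt_square; auto). rewrite E at 1.
      apply sqrt_le_1_alt. lra. }
    pose proof (Bnn 0%nat ltac:(lia)). lra.
  - simpl. specialize (IHm ltac:(lia)). pose proof (Bm_mono m Hm).
    apply Rmax_lub. lra.
    destruct (Rle_lt_dec (nk (S m)) (Vm m)).
    + lra.
    + assert (EV: Vm (S m) = nk (S m)). { simpl. rewrite Rmax_right; lra. }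
      pose proof (level_ineq (S m) HN ltac:(lia)) as LI. rewrite EV in LI.
      apply quad_root; [apply nk_nonneg| exact Aa | apply Bnn; lia | rewrite Asq; lra].
Qed.


Lemma Ephi_Vh : forall j, (j <= N)%nat -> in_Vh M (Ephi t phi j).
Proof.
  intros. unfold Ephi. destruct (Nat.leb j 1).
  - apply Hphi. lia.
  - destruct (Hphi (j-1)%nat ltac:(lia)) as [A1 B1]. destruct (Hphi (j-2)%nat ltac:(lia)) as [A2 B2].
    split; rewrite ?A1, ?B1, ?A2, ?B2; ring.
Qed.

Lemma nrm_Fv : forall j, (j <= N)%nat -> nrm hh M (Fv j) <= nrm hh M (zeta j) + CJ * nrm hh M (Ephi t phi j).
Proof.
  intros. unfold Fv.
  rewrite (nrm_ext hh M _ (fun i => 1 * zeta j i + (-1) * Jh rho xl xr M (Ephi t phi j) i)) by (intros; ring).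
  eapply Rle_trans. apply nrm_comb. apply hh_pos.
  rewrite Rabs_R1. replace (Rabs (-1)) with 1 by (unfold Rabs; destruct (Rcase_abs (-1)); lra). pose proof (HJ (Ephi t phi j) (Ephi_Vh j H)). fold hh in H0. lra.
Qed.

Lemma nrm_E_big : forall j, (3 <= j <= N)%nat -> nrm hh M (Ephi t phi j) <= (1 + 2 * rmax) * Vm j.
Proof.
  intros. unfold Ephi. replace (Nat.leb j 1) with false by (symmetry; apply Nat.leb_gt; lia).
  rewrite (nrm_ext hh M _ (fun i => (1 + ratio t j) * phi (j-1)%nat i + (- ratio t j) * phi (j-2)%nat i)) by (intros; ring).
  eapply Rle_trans. apply (nrm_comb hh M hh_pos (1 + ratio t j) (- ratio t j) (phi (j-1)%nat) (phi (j-2)%nat)).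
  pose proof (Hrk j H). rewrite Rabs_Ropp, !Rabs_right by lra.
  pose proof (Vm_ge (j-1) j ltac:(lia)). pose proof (Vm_ge (j-2) j ltac:(lia)). unfold nk in *.
  pose proof (nrm_nonneg hh M (phi (j-1)%nat)). pose proof (nrm_nonneg hh M (phi (j-2)%nat)). pose proof (Vm_nonneg j).
  assert ((1 + ratio t j) * nrm hh M (phi (j - 1)%nat) <= (1 + ratio t j) * Vm j) by (apply Rmult_le_compat_l; lra).
  assert (ratio t j * nrm hh M (phi (j - 2)%nat) <= ratio t j * Vm j) by (apply Rmult_le_compat_l; lra).
  assert (ratio t j * Vm j <= rmax * Vm j) by (apply Rmult_le_compat_r; lra).
  lra.
Qed.

Lemma nrm_E1 : nrm hh M (Ephi t phi 1) = nk 0.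
Proof. reflexivity. Qed.

Lemma nrm_E2 : (2 <= N)%nat -> nrm hh M (Ephi t phi 2) <= (1 + ratio t 2) * nk 1 + ratio t 2 * nk 0.
Proof. intros HN. pose proof (ratio_pos t N Hinc 2 ltac:(lia)).
  unfold Ephi. simpl Nat.leb. cbv iota.
  rewrite (nrm_ext hh M _ (fun i => (1 + ratio t 2) * phi (2-1)%nat i + (- ratio t 2) * phi (2-2)%nat i)) by (intros; ring).
  eapply Rle_trans. apply (nrm_comb hh M hh_pos (1 + ratio t 2) (- ratio t 2) (phi 1%nat) (phi 0%nat)).
  rewrite Rabs_Ropp, !Rabs_right by lra. unfold nk. simpl. lra.
Qed.

Definition g12 (j : nat) : R := if Nat.eqb j 1 then nk 0 else if Nat.eqb j 2 then nrm hh M (Ephi t phi 2) else 0.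
Definition i3V (j : nat) : R := if Nat.leb 3 j then Vm j else 0.

Lemma nrmF_bound : forall j, (1 <= j <= N)%nat ->
  nrm hh M (Fv j) <= 1 * nrm hh M (zeta j) + CJ * (1 * g12 j + (1 + 2 * rmax) * i3V j).
Proof.
  intros. eapply Rle_trans. apply nrm_Fv. lia.
  unfold g12, i3V. destruct (Nat.eqb j 1) eqn:E1.
  - apply Nat.eqb_eq in E1. subst. rewrite nrm_E1. simpl. lra.
  - apply Nat.eqb_neq in E1. destruct (Nat.eqb j 2) eqn:E2.
    + apply Nat.eqb_eq in E2. subst. simpl. lra.
    + apply Nat.eqb_neq in E2. replace (Nat.leb 3 j) with true by (symmetry; apply Nat.leb_le; lia).
      pose proof (nrm_E_big j ltac:(lia)). pose proof (nrm_nonneg hh M (zeta j)). nra.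
Qed.

Definition Zs (k : nat) := cv t (fun j => nrm hh M (zeta j)) k.
Definition Es (k : nat) := cv t g12 k.

Lemma fs_bound : forall k, (k <= N)%nat -> fs k <= Zs k + CJ * Es k + CJ * (1 + 2 * rmax) * (tau t k * Vm k).
Proof.
  intros. unfold fs.
  eapply Rle_trans. apply (cv_mono t N Hinc _ (fun j => 1 * nrm hh M (zeta j) + CJ * (1 * g12 j + (1 + 2 * rmax) * i3V j)) k H).
  intros. apply nrmF_bound. lia.
  rewrite cv_lin. rewrite (cv_lin t 1 (1 + 2 * rmax) g12 i3V). fold (Zs k). fold (Es k).
  assert (cv t i3V k <= tau t k * Vm k).
  { apply cv_bound with (N := N); auto. intros. unfold i3V. destruct (Nat.leb 3 j).
    apply Vm_mono; lia. apply Vm_nonneg. }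
  assert (CJ * ((1 + 2 * rmax) * cv t i3V k) <= CJ * (1 + 2 * rmax) * (tau t k * Vm k)).
  { rewrite <- Rmult_assoc. apply Rmult_le_compat_l. nra. auto. }
  lra.
Qed.


Definition AA (n : nat) := aa + 2 * sumR 1 n (fun k => Zs k + CJ * Es k).
Definition C1' := lam' + 2 * CJ * (1 + 2 * rmax).

Lemma Zs_nonneg : forall k, (k <= N)%nat -> 0 <= Zs k.
Proof. intros. apply cv_nonneg with (N := N); auto. intros. apply nrm_nonneg. Qed.
Lemma Es_nonneg : forall k, (k <= N)%nat -> 0 <= Es k.
Proof. intros. apply cv_nonneg with (N := N); auto. intros. unfold g12.
  destruct (Nat.eqb j 1). apply nk_nonneg. destruct (Nat.eqb j 2). apply nrm_nonneg. lra. Qed.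

Lemma V_rec : forall m n, (2 <= N)%nat -> (m <= n)%nat -> (n <= N)%nat ->
  Vm m <= AA n + C1' * sumR 1 m (fun k => tau t k * Vm k).
Proof.
  intros m n HN Hmn Hn. pose proof (V_bound m HN ltac:(lia)). unfold Bm in H.
  assert (sumR 1 m fs <= sumR 1 m (fun k => Zs k + CJ * Es k) + CJ * (1 + 2 * rmax) * sumR 1 m (fun k => tau t k * Vm k)).
  { rewrite <- sumR_scal, <- sumR_plus. apply sumR_le. intros. pose proof (fs_bound i ltac:(lia)). lra. }
  assert (sumR 1 m (fun k => Zs k + CJ * Es k) <= sumR 1 n (fun k => Zs k + CJ * Es k)).
  { apply sumR_mono_n; auto. intros. pose proof (Zs_nonneg i ltac:(lia)). pose proof (Es_nonneg i ltac:(lia)). nra. }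
  unfold AA, C1'. lra.
Qed.


Lemma step1_eq : (1 <= N)%nat -> forall i, (1 <= i <= M - 1)%nat ->
  dphi 1 i = tau t 1 * (Fv 1 i + c1 * lapl hh (phi 1%nat) i - c2 * grad hh (phi 1%nat) i - c3 * phi 1%nat i).
Proof.
  intros HN i Hi. pose proof (scheme2 1 i ltac:(lia) Hi). rewrite bdf2_1_0, bdf2_1_1 in H.
  pose proof (tau_pos t N Hinc 1 ltac:(lia)). rewrite <- H. field. lra.
Qed.

Definition a00 := aform hh M (phi 0%nat) (phi 0%nat).

Lemma ip_4' : forall A B C D w a b c d, ip hh M (fun i => d * (A i + a * B i - b * C i - c * D i)) w
  = d * (ip hh M A w + a * ip hh M B w - b * ip hh M C w - c * ip hh M D w).
Proof.
  intros. rewrite <- ip_4. unfold ip. rewrite <- sumR_scal. apply sumR_ext. intros. ring.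
Qed.

Lemma step1_H1 : (1 <= N)%nat -> tau t 1 * (c2^2/(2*c1) + Rabs c3) <= 1/4 ->
  a11 <= 2 * a00 + 2 * tau t 1 * (nrm hh M (Fv 1) * nrm hh M (Fv 1)) / c1.
Proof.
  intros HN Hsm. pose proof (tau_pos t N Hinc 1 ltac:(lia)) as T1.
  pose proof hh_pos as Hh.
  assert (V0: in_Vh M (phi 0%nat)) by (apply Hphi; lia). assert (V1: in_Vh M (phi 1%nat)) by (apply Hphi; lia).
  set (w := fun i => - lapl hh (phi 1%nat) i).
  assert (E: ip hh M (dphi 1) w = tau t 1 * (ip hh M (Fv 1) w + c1 * ip hh M (lapl hh (phi 1%nat)) w - c2 * ip hh M (grad hh (phi 1%nat)) w - c3 * ip hh M (phi 1%nat) w)).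
  { rewrite <- ip_4'. apply ip_ext. intros. split; auto. apply step1_eq; auto. }
  assert (E1: ip hh M (dphi 1) w = a11 - aform hh M (phi 1%nat) (phi 0%nat)).
  { rewrite (ip_ext hh M (dphi 1) (fun i => 1 * phi 1%nat i + (-1) * phi 0%nat i) w w) by (intros; split; unfold dphi; simpl; ring).
    rewrite ip_lin. unfold a11, aform, w. rewrite !(ip_sym hh M _ (fun i => - lapl hh (phi 1%nat) i)). ring. }
  assert (E2: ip hh M (lapl hh (phi 1%nat)) w = - ip hh M w w).
  { unfold w. rewrite (ip_ext hh M (lapl hh (phi 1%nat)) (fun i => (-1) * (- lapl hh (phi 1%nat) i) + 0 * (- lapl hh (phi 1%nat) i)) (fun i => - lapl hh (phi 1%nat) i) (fun i => - lapl hh (phi 1%nat) i)) by (intros; split; ring).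
    rewrite ip_lin. ring. }
  assert (E3: ip hh M (phi 1%nat) w = a11) by (unfold a11, aform, w; apply ip_sym).
  set (Y := sqrt a11). set (Z := sqrt a00). set (Wn := nrm hh M w). set (F := nrm hh M (Fv 1)).
  assert (HY: Y * Y = a11) by (apply sqrt_sqrt; apply a_pos; auto).
  assert (HZ: Z * Z = a00) by (apply sqrt_sqrt; apply a_pos; auto).
  assert (Y0: 0 <= Y) by apply sqrt_pos. assert (Z0: 0 <= Z) by apply sqrt_pos.
  assert (W0: 0 <= Wn) by apply nrm_nonneg. assert (F0: 0 <= F) by apply nrm_nonneg.
  assert (WW: ip hh M w w = Wn * Wn) by (symmetry; apply nrm_sq; auto).
  assert (B1: aform hh M (phi 1%nat) (phi 0%nat) <= Y * Z).
  { pose proof (a_CS hh M Hh HM _ _ V1 V0). pose proof (Rle_abs (aform hh M (phi 1%nat) (phi 0%nat))). unfold Y, Z, a11, a00. lra. }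
  assert (B2: ip hh M (Fv 1) w <= F * Wn) by (apply ip_le; auto).
  assert (B3: - c2 * ip hh M (grad hh (phi 1%nat)) w <= Rabs c2 * (Y * Wn)).
  { apply neg_mul_abs. eapply Rle_trans. apply ip_CS; auto. apply Rmult_le_compat_r; auto.
    unfold nrm, Y. apply sqrt_le_1_alt. apply grad_bound; auto. }
  assert (B4: - c3 * a11 <= Rabs c3 * a11).
  { apply neg_mul_abs. rewrite Rabs_right. lra. apply Rle_ge. unfold a11. apply a_pos; auto. }
  rewrite E1, E2, E3, WW in E.
  assert (Main: Y * Y - Y * Z <= tau t 1 * (F * Wn - c1 * (Wn * Wn) + Rabs c2 * (Y * Wn) + Rabs c3 * (Y * Y))).
  { rewrite HY. assert (X: ip hh M (Fv 1) w + c1 * - (Wn * Wn) - c2 * ip hh M (grad hh (phi 1%nat)) w - c3 * a11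
             <= F * Wn - c1 * (Wn * Wn) + Rabs c2 * (Y * Wn) + Rabs c3 * a11) by lra.
    assert (tau t 1 * (ip hh M (Fv 1) w + c1 * - (Wn * Wn) - c2 * ip hh M (grad hh (phi 1%nat)) w - c3 * a11) <=
            tau t 1 * (F * Wn - c1 * (Wn * Wn) + Rabs c2 * (Y * Wn) + Rabs c3 * a11)) by (apply Rmult_le_compat_l; lra).
    lra. }
  assert (Y1: F * Wn <= c1 * (Wn*Wn) / 2 + F * F / (2 * c1)).
  { assert (0 <= (c1 * Wn - F)^2) by apply pow2_ge_0.
    assert (c1 * (Wn*Wn) / 2 + F * F / (2 * c1) - F * Wn = (c1 * Wn - F)^2 / (2*c1)) by (field; lra).
    assert (0 <= (c1 * Wn - F)^2 / (2*c1)) by (apply Rmult_le_pos; auto; left; apply Rinv_0_lt_compat; lra). lra. }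
  assert (Y2: Rabs c2 * (Y * Wn) <= c1 * (Wn*Wn) / 2 + c2^2/(2*c1) * (Y * Y)).
  { assert (0 <= (c1 * Wn - Rabs c2 * Y)^2) by apply pow2_ge_0.
    assert (c2^2 = Rabs c2 * Rabs c2) by (rewrite <- Rabs_mult; rewrite Rabs_right; [ring| nra]).
    assert (c1 * (Wn*Wn) / 2 + c2^2/(2*c1) * (Y * Y) - Rabs c2 * (Y * Wn) = (c1 * Wn - Rabs c2 * Y)^2 / (2*c1)) by (rewrite H0; field; lra).
    assert (0 <= (c1 * Wn - Rabs c2 * Y)^2 / (2*c1)) by (apply Rmult_le_pos; auto; left; apply Rinv_0_lt_compat; lra). lra. }
  assert (Main2: Y * Y - Y * Z <= tau t 1 * (F * F / (2 * c1)) + tau t 1 * (c2^2/(2*c1) + Rabs c3) * (Y * Y)).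
  { assert (tau t 1 * (F * Wn - c1 * (Wn * Wn) + Rabs c2 * (Y * Wn) + Rabs c3 * (Y * Y)) <=
            tau t 1 * (F * F / (2 * c1) + (c2^2/(2*c1) + Rabs c3) * (Y * Y))) by (apply Rmult_le_compat_l; lra).
    lra. }
  assert (tau t 1 * (c2^2/(2*c1) + Rabs c3) * (Y * Y) <= 1/4 * (Y * Y)) by (apply Rmult_le_compat_r; nra).
  assert (0 <= (Y - Z) * (Y - Z)) by apply Rle_0_sqr. assert (Y * Z <= Y * Y / 2 + Z * Z / 2) by lra.
  assert (2 * tau t 1 * (F * F) / c1 = 4 * (tau t 1 * (F * F / (2 * c1)))) by (field; lra).
  rewrite <- HY, <- HZ. fold F. lra.
Qed.

Lemma step1_L2 : (1 <= N)%nat -> tau t 1 * Rabs c3 <= 1/16 -> tau t 1 * CJ <= 1/20 ->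
  nk 1 <= 2 * nk 0 + 3 * tau t 1 * nrm hh M (zeta 1%nat).
Proof.
  intros HN Hc3 HcJ. pose proof (tau_pos t N Hinc 1 ltac:(lia)) as T1. pose proof hh_pos as Hh.
  assert (V0: in_Vh M (phi 0%nat)) by (apply Hphi; lia). assert (V1: in_Vh M (phi 1%nat)) by (apply Hphi; lia).
  assert (E: ip hh M (dphi 1) (phi 1%nat) = tau t 1 * (ip hh M (Fv 1) (phi 1%nat) + c1 * ip hh M (lapl hh (phi 1%nat)) (phi 1%nat) - c2 * ip hh M (grad hh (phi 1%nat)) (phi 1%nat) - c3 * ip hh M (phi 1%nat) (phi 1%nat))).
  { rewrite <- ip_4'. apply ip_ext. intros. split; auto. apply step1_eq; auto. }
  rewrite ip_lapl, grad_skew in E; auto.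
  assert (E1: ip hh M (dphi 1) (phi 1%nat) = ip hh M (phi 1%nat) (phi 1%nat) - ip hh M (phi 0%nat) (phi 1%nat)).
  { rewrite (ip_ext hh M (dphi 1) (fun i => 1 * phi 1%nat i + (-1) * phi 0%nat i) (phi 1%nat) (phi 1%nat)) by (intros; split; unfold dphi; simpl; ring).
    rewrite ip_lin. ring. }
  rewrite E1 in E.
  pose proof (ip_le hh M Hh (phi 0%nat) (phi 1%nat)).
  pose proof (ip_le hh M Hh (Fv 1) (phi 1%nat)).
  pose proof (nrm_Fv 1 HN). rewrite nrm_E1 in H1.
  pose proof (a_pos hh M Hh HM (phi 1%nat) V1).
  rewrite <- !nrm_sq in E by auto. fold (nk 1) (nk 0) in *. unfold nk in *.
  set (n1 := nrm hh M (phi 1%nat)) in *. set (n0 := nrm hh M (phi 0%nat)) in *.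
  set (F := nrm hh M (Fv 1)) in *. set (zz := nrm hh M (zeta 1%nat)) in *.
  assert (0 <= n1) by apply nrm_nonneg. assert (0 <= n0) by apply nrm_nonneg. assert (0 <= zz) by apply nrm_nonneg.
  assert (- c3 * (n1 * n1) <= Rabs c3 * (n1 * n1)) by (apply neg_mul_abs; rewrite Rabs_right; nra).
  assert (Ineq: n1 * n1 - n0 * n1 <= tau t 1 * ((zz + CJ * n0) * n1 + Rabs c3 * (n1 * n1))).
  { assert (ip hh M (Fv 1) (phi 1%nat) <= (zz + CJ * n0) * n1) by (eapply Rle_trans; [apply H0|]; apply Rmult_le_compat_r; auto).
    assert (ip hh M (Fv 1) (phi 1%nat) + c1 * - aform hh M (phi 1%nat) (phi 1%nat) - c2 * 0 - c3 * (n1 * n1) <= (zz + CJ * n0) * n1 + Rabs c3 * (n1 * n1)) by nra.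
    assert (tau t 1 * (ip hh M (Fv 1) (phi 1%nat) + c1 * - aform hh M (phi 1%nat) (phi 1%nat) - c2 * 0 - c3 * (n1 * n1)) <= tau t 1 * ((zz + CJ * n0) * n1 + Rabs c3 * (n1 * n1))) by (apply Rmult_le_compat_l; lra).
    lra. }
  destruct (Req_dec n1 0). rewrite H7. nra.
  assert (0 < n1) by lra.
  assert (n1 - n0 <= tau t 1 * (zz + CJ * n0) + tau t 1 * Rabs c3 * n1).
  { apply Rmult_le_reg_r with n1; auto. nra. }
  nra.
Qed.


Variable p : nat -> nat -> R.
Hypothesis Hp : is_DCC t N p.

Lemma sq_le_le : forall a b, 0 <= a -> 0 <= b -> a * a <= b * b -> a <= b.
Proof. intros. destruct (Rle_lt_dec a b); auto. nra. Qed.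

Lemma sum_first_two : forall f n, (2 <= n)%nat -> (forall i, (1 <= i <= n)%nat -> 0 <= f i) -> f 1%nat + f 2%nat <= sumR 1 n f.
Proof.
  intros. rewrite sumR_first by lia. rewrite sumR_first by lia.
  assert (0 <= sumR 3 n f) by (apply sumR_nonneg; intros; apply H0; lia). lra.
Qed.

Lemma sum_g12 : forall n, (2 <= n)%nat -> sumR 1 n (fun j => p n (n-j)%nat * g12 j) = p n (n-1)%nat * nk 0 + p n (n-2)%nat * nrm hh M (Ephi t phi 2).
Proof.
  intros. rewrite sumR_first by lia. rewrite sumR_first by lia. rewrite sumR_zero. unfold g12. simpl. ring.
  intros. unfold g12. destruct (Nat.eqb_spec i 1). lia. destruct (Nat.eqb_spec i 2). lia. ring.
Qed.

Lemma eta2_val : (2 <= N)%nat -> eta t 2 = ratio t 2 ^ 2 / (1 + 2 * ratio t 2).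
Proof.
  intros. unfold eta. rewrite bdf2_k_0, bdf2_k_1 by lia. pose proof (ratio_pos t N Hinc 2 ltac:(lia)).
  pose proof (tau_pos t N Hinc 2 ltac:(lia)). field. repeat split; nra.
Qed.

Lemma P1_lower : forall n, (2 <= n <= N)%nat -> tau t 1 * (1 + eta t 2) <= p n (n-1)%nat.
Proof.
  intros. rewrite (p_as_cv t N Hinc p Hp) by lia.
  assert (SF: cv t (ind 1) 1 + cv t (ind 1) 2 <= sumR 1 n (cv t (ind 1))).
  { apply sum_first_two. lia. intros. apply (cv_ind_nonneg t N Hinc). lia. }
  eapply Rle_trans. 2: exact SF.
  simpl. unfold ind. simpl. rewrite (eta_1 t). unfold kap. rewrite bdf2_1_0.
  pose proof (tau_pos t N Hinc 1 ltac:(lia)). replace (1 / (1 / tau t 1)) with (tau t 1) by (field; lra). lra.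
Qed.

Lemma final_main : (2 <= N)%nat ->
  taumax t N <= 1 / (2 * (c2 ^ 2 / (c1 * Crc rmax * delta) + 2 * Rabs c3 + 2 * CJ * (1 + 2 * rmax))) ->
  taumax t N <= 1 / (2 * (c2 ^ 2 / c1 + 4 * Rabs c3 + 2 * CJ)) ->
  taumax t N <= 1 / (4 * (5 * CJ + 4 * Rabs c3)) ->
  forall n, (2 <= n <= N)%nat ->
  nk n <= 2 * exp (2 * (c2 ^ 2 / (c1 * Crc rmax * delta) + 2 * Rabs c3 + 2 * CJ * (1 + 2 * rmax)) * t (n - 1)%nat)
       * ((3 + ratio t 2) * nk 0 + 6 * p n (n - 2)%nat * CJ * (tau t 1 + tau t 2) * nrm hh M (zeta 1%nat)
          + 4 * (rmax ^ 2 * sqrt rmax) / delta * sqrt (c1 * ratio t 2) * sqrt (taumax t N) * semi1 hh M (phi 0%nat)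
          + 7 * sumR 1 n (fun k => p n (n - k)%nat * nrm hh M (zeta k))).
Proof.
  intros HN H1 H2 H3 n Hn.
  set (T := taumax t N) in *.
  assert (HT: forall k, (1 <= k <= N)%nat -> tau t k <= T).
  { intros. unfold T, taumax. apply (maxR_ge (tau t) 1 N k H). }
  pose proof (tau_pos t N Hinc 1 ltac:(lia)) as T1. pose proof (tau_pos t N Hinc 2 ltac:(lia)) as T2.
  pose proof (HT 1%nat ltac:(lia)) as T1T.
  pose proof (ratio_pos t N Hinc 2 ltac:(lia)) as R2.
  pose proof Crc_pos as Cp. pose proof (Rabs_pos c3) as A3.
  set (C1 := c2 ^ 2 / (c1 * Crc rmax * delta) + 2 * Rabs c3 + 2 * CJ * (1 + 2 * rmax)) in *.
  assert (C1e : C1' = C1). { unfold C1', lam', mu, C1. field. repeat split; lra. }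
  assert (c2t : 0 <= c2 ^ 2 / (c1 * Crc rmax * delta)).
  { apply Rmult_le_pos. apply pow2_ge_0. left. apply Rinv_0_lt_compat. apply Rmult_lt_0_compat. nra. lra. }
  assert (C1p : 0 < C1). { unfold C1. nra. }
  assert (TC1 : T * C1 <= 1/2). { apply Rmult_le_reg_r with (2 * C1). lra.
    replace (1 / 2 * (2 * C1)) with C1 by field. replace (T * C1 * (2 * C1)) with (T * (2 * C1) * C1) by ring.
    assert (T * (2 * C1) <= 1). { apply Rmult_le_reg_r with (/ (2 * C1)). apply Rinv_0_lt_compat; lra.
      rewrite Rmult_assoc, Rinv_r by lra. rewrite Rmult_1_r. unfold Rdiv in H1. lra. } nra. }
  assert (c2b : 0 <= c2 ^ 2 / c1). { apply Rmult_le_pos. apply pow2_ge_0. left. apply Rinv_0_lt_compat. lra. }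
  assert (TC2 : T * (c2 ^ 2 / c1 + 4 * Rabs c3 + 2 * CJ) <= 1/2).
  { set (D := c2 ^ 2 / c1 + 4 * Rabs c3 + 2 * CJ) in *. assert (0 < D) by (unfold D; lra).
    apply Rmult_le_reg_r with (2 * D). lra. replace (1 / 2 * (2 * D)) with D by field.
    assert (T * (2 * D) <= 1). { apply Rmult_le_reg_r with (/ (2 * D)). apply Rinv_0_lt_compat; lra.
      rewrite Rmult_assoc, Rinv_r by lra. rewrite Rmult_1_r. unfold Rdiv in H2. lra. } nra. }
  assert (TC3 : T * (4 * (5 * CJ + 4 * Rabs c3)) <= 1).
  { set (D := 4 * (5 * CJ + 4 * Rabs c3)) in *. assert (0 < D) by (unfold D; lra).
    apply Rmult_le_reg_r with (/ D). apply Rinv_0_lt_compat; lra.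
    rewrite Rmult_assoc, Rinv_r by lra. rewrite Rmult_1_r. unfold Rdiv in H3. lra. }
  assert (TCJ : T * CJ <= 1/20) by nra.
  assert (Tc3 : T * Rabs c3 <= 1/16) by nra.
  assert (T0 : 0 < T) by lra.
  assert (AAnn : 0 <= AA n).
  { unfold AA. assert (0 <= aa) by apply sqrt_pos.
    assert (0 <= sumR 1 n (fun k => Zs k + CJ * Es k)).
    { apply sumR_nonneg. intros. pose proof (Zs_nonneg i ltac:(lia)). pose proof (Es_nonneg i ltac:(lia)). nra. }
    lra. }
  assert (G: Vm n <= 2 * AA n * exp (2 * C1 * t (n-1)%nat)).
  { pose proof (gronwall Vm (tau t) (AA n) C1' n AAnn ltac:(rewrite C1e; lra)) as GR.
    assert (Ht: forall k, (1 <= k <= n)%nat -> 0 <= tau t k /\ C1' * tau t k <= 1/2).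
    { intros. pose proof (tau_pos t N Hinc k ltac:(lia)). pose proof (HT k ltac:(lia)). rewrite C1e. split. lra. nra. }
    specialize (GR Ht (fun k _ => Vm_nonneg k)).
    assert (Hrec: forall m, (1 <= m <= n)%nat -> Vm m <= AA n + C1' * sumR 1 m (fun k => tau t k * Vm k)).
    { intros. apply V_rec; lia. }
    specialize (GR Hrec (n-1)%nat ltac:(lia)). replace (S (n-1)) with n in GR by lia.
    rewrite (sum_tau t N) in GR by lia. rewrite Ht0, Rminus_0_r, C1e in GR. auto. }
  assert (Hnk : nk n <= Vm n) by (apply Vm_ge; lia).
  set (inner := (3 + ratio t 2) * nk 0 + 6 * p n (n - 2)%nat * CJ * (tau t 1 + tau t 2) * nrm hh M (zeta 1%nat)
          + 4 * (rmax ^ 2 * sqrt rmax) / delta * sqrt (c1 * ratio t 2) * sqrt T * semi1 hh M (phi 0%nat)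
          + 7 * sumR 1 n (fun k => p n (n - k)%nat * nrm hh M (zeta k))).
  assert (Main: AA n <= inner).
  { unfold AA. rewrite sumR_plus, sumR_scal.
    replace (sumR 1 n Zs) with (sumR 1 n (fun j => p n (n-j)%nat * nrm hh M (zeta j)))
      by (unfold Zs; rewrite <- (dcc_sum t N Hinc p Hp) by lia; reflexivity).
    replace (sumR 1 n Es) with (sumR 1 n (fun j => p n (n-j)%nat * g12 j))
      by (unfold Es; rewrite <- (dcc_sum t N Hinc p Hp) by lia; reflexivity).
    rewrite sum_g12 by lia.
    unfold inner. fold (nk 0).
    set (Zsum := sumR 1 n (fun j => p n (n-j)%nat * nrm hh M (zeta j))) in *.
    set (P1 := p n (n-1)%nat). set (P2 := p n (n-2)%nat).
    set (z1 := nrm hh M (zeta 1%nat)). set (E2 := nrm hh M (Ephi t phi 2)).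
    set (F := nrm hh M (Fv 1)). set (r2 := ratio t 2) in *.
    pose proof (nk_nonneg 0) as N0. pose proof (nk_nonneg 1) as N1.
    assert (Z1: 0 <= z1) by apply nrm_nonneg. assert (F0: 0 <= F) by apply nrm_nonneg.
    assert (FB: F <= z1 + CJ * nk 0) by (pose proof (nrm_Fv 1 ltac:(lia)) as X; rewrite nrm_E1 in X; exact X).
    assert (E2B: E2 <= (1 + r2) * nk 1 + r2 * nk 0) by (apply nrm_E2; lia).
    assert (N1B: nk 1 <= 2 * nk 0 + 3 * tau t 1 * z1).
    { apply step1_L2. lia. nra. nra. }
    assert (H1B: a11 <= 2 * a00 + 2 * tau t 1 * (F * F) / c1).
    { apply step1_H1. lia.
      assert (c2 ^ 2 / (2 * c1) + Rabs c3 <= (c2 ^ 2 / c1 + 4 * Rabs c3 + 2 * CJ) / 2).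
      { replace (c2 ^ 2 / (2 * c1)) with ((c2 ^ 2 / c1) / 2) by (field; lra). lra. }
      assert (0 <= c2 ^ 2 / (2 * c1) + Rabs c3).
      { assert (0 <= c2 ^ 2 / (2 * c1)) by (apply Rmult_le_pos; [apply pow2_ge_0| left; apply Rinv_0_lt_compat; lra]). lra. }
      nra. }
    assert (P1n: 0 <= P1) by (apply (p_nonneg t N Hinc p Hp); lia).
    assert (P2n: 0 <= P2) by (apply (p_nonneg t N Hinc p Hp); lia).
    assert (P1b: P1 <= 2 * T) by (apply (p_le t N Hinc p Hp T HT); lia).
    assert (P2b: P2 <= 2 * T) by (apply (p_le t N Hinc p Hp T HT); lia).
    assert (P1l: tau t 1 * (1 + eta t 2) <= P1) by (apply P1_lower; lia).
    rewrite eta2_val in P1l by lia. fold r2 in P1l.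
    assert (ZS: P1 * z1 <= Zsum).
    { unfold Zsum. rewrite sumR_first by lia.
      assert (0 <= sumR 2 n (fun j => p n (n - j)%nat * nrm hh M (zeta j))).
      { apply sumR_nonneg. intros. apply Rmult_le_pos. apply (p_nonneg t N Hinc p Hp); lia. apply nrm_nonneg. }
      fold P1 z1. lra. }
    set (eta2 := r2 ^ 2 / (1 + 2 * r2)) in *.
    assert (ET: 0 <= eta2 <= r2). { unfold eta2. split. apply Rmult_le_pos. apply pow2_ge_0. left; apply Rinv_0_lt_compat; lra.
      apply Rmult_le_reg_r with (1 + 2 * r2). lra. unfold Rdiv. rewrite Rmult_assoc, Rinv_l by lra. nra. }
    pose proof sY_ge as SY. pose proof sY_pos as SYp.
    assert (NU: 0 <= nu <= r2 * (1 + rmax)).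
    { unfold nu. fold r2. split. apply Rlt_le, Rdiv_lt_0_compat; lra.
      apply Rmult_le_reg_r with (4 * sY). lra. unfold Rdiv. rewrite Rmult_assoc, Rinv_l by lra.
      assert (1 <= (1 + rmax) * (4 * sY)).
      { assert (1 / (4 * (1 + rmax)) * (4 * (1 + rmax)) = 1) by (field; lra). nra. } nra. }
    set (snu := sqrt nu). assert (SN: snu * snu = nu) by (apply sqrt_sqrt; lra). assert (SN0: 0 <= snu) by apply sqrt_pos.
    assert (SNB: 2 * snu <= 5 * (1 + eta2)).
    { apply sq_le_le. lra. lra.
      assert (4 * nu <= 25 * ((1 + eta2) * (1 + eta2))).
      { assert (E: 1 + eta2 = (1 + r2)^2 / (1 + 2 * r2)) by (unfold eta2; field; lra).
        rewrite E. pose proof rmax_bounds rmax delta Hrmax_pos Hrmax_root as RB.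
        assert (4 * nu <= 4 * r2 * 5.885) by nra.
        assert (4 * r2 * 5.885 <= 25 * ((1 + r2) ^ 2 / (1 + 2 * r2) * ((1 + r2) ^ 2 / (1 + 2 * r2)))).
        { replace (25 * ((1 + r2) ^ 2 / (1 + 2 * r2) * ((1 + r2) ^ 2 / (1 + 2 * r2)))) with (25 * (1 + r2)^4 / ((1 + 2 * r2) * (1 + 2 * r2))) by (field; lra).
          apply Rmult_le_reg_r with ((1 + 2 * r2) * (1 + 2 * r2)). nra.
          replace (25 * (1 + r2)^4 / ((1 + 2 * r2) * (1 + 2 * r2)) * ((1 + 2 * r2) * (1 + 2 * r2))) with (25 * (1 + r2)^4) by (field; lra).
          nra. }
        lra. }
      nra. }
    assert (AAB: aa <= nk 0 + 2 * tau t 1 * F * snu + sqrt (4 * c1 * nu * tau t 1 * a00)).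
    { unfold aa. pose proof (a_pos hh M hh_pos HM (phi 0%nat) (Hphi 0%nat ltac:(lia))) as A00. fold a00 in A00.
      assert (Q1: 2 * c1 * nu * tau t 1 * a11 <= 4 * c1 * nu * tau t 1 * a00 + 4 * nu * (tau t 1 * tau t 1) * (F * F)).
      { assert (0 <= 2 * c1 * nu * tau t 1) by (apply Rmult_le_pos; [nra| lra]).
        assert (Hq: 2 * c1 * nu * tau t 1 * a11 <= 2 * c1 * nu * tau t 1 * (2 * a00 + 2 * tau t 1 * (F * F) / c1)) by (apply Rmult_le_compat_l; auto).
        replace (2 * c1 * nu * tau t 1 * (2 * a00 + 2 * tau t 1 * (F * F) / c1)) with (4 * c1 * nu * tau t 1 * a00 + 4 * nu * (tau t 1 * tau t 1) * (F * F)) in Hq by (field; lra). exact Hq. }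
      assert (0 <= 4 * c1 * nu * tau t 1 * a00) by (apply Rmult_le_pos; [apply Rmult_le_pos; [nra|lra]|auto]).
      assert (0 <= 4 * nu * (tau t 1 * tau t 1) * (F * F)) by (apply Rmult_le_pos; nra).
      eapply Rle_trans. apply sqrt_le_1_alt. apply Rplus_le_compat_l. exact Q1.
      eapply Rle_trans. apply sqrt_add_le. nra. lra.
      rewrite sqrt_square by auto.
      eapply Rle_trans. apply Rplus_le_compat_l. apply sqrt_add_le; auto.
      assert (sqrt (4 * nu * (tau t 1 * tau t 1) * (F * F)) <= 2 * tau t 1 * F * snu).
      { apply sqrt_le_sq. apply Rmult_le_pos; [nra|auto]. right. rewrite <- SN. ring. }
      lra. }
    assert (X1B: sqrt (4 * c1 * nu * tau t 1 * a00) <= 4 * (rmax ^ 2 * sqrt rmax) / delta * sqrt (c1 * r2) * sqrt T * semi1 hh M (phi 0%nat)).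
    { pose proof (a_pos hh M hh_pos HM (phi 0%nat) (Hphi 0%nat ltac:(lia))) as A00. fold a00 in A00.
      assert (S00: semi1 hh M (phi 0%nat) * semi1 hh M (phi 0%nat) = a00) by (apply sqrt_sqrt; auto).
      assert (SR: sqrt rmax * sqrt rmax = rmax) by (apply sqrt_sqrt; lra).
      assert (SC: sqrt (c1 * r2) * sqrt (c1 * r2) = c1 * r2) by (apply sqrt_sqrt; nra).
      assert (ST: sqrt T * sqrt T = T) by (apply sqrt_sqrt; lra).
      pose proof (sqrt_pos rmax). pose proof (sqrt_pos (c1 * r2)). pose proof (sqrt_pos T). pose proof (sqrt_pos (phi 0%nat 0%nat)).
      assert (0 <= semi1 hh M (phi 0%nat)) by apply sqrt_pos.
      apply sqrt_le_sq.
      { apply Rmult_le_pos; auto. apply Rmult_le_pos; auto. apply Rmult_le_pos; auto.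
        apply Rmult_le_pos. apply Rmult_le_pos. lra. apply Rmult_le_pos. apply pow2_ge_0. auto. left; apply Rinv_0_lt_compat; lra. }
      set (K := 4 * (rmax ^ 2 * sqrt rmax) / delta).
      replace (K * sqrt (c1 * r2) * sqrt T * semi1 hh M (phi 0%nat) * (K * sqrt (c1 * r2) * sqrt T * semi1 hh M (phi 0%nat)))
        with ((K * K) * (sqrt (c1 * r2) * sqrt (c1 * r2)) * (sqrt T * sqrt T) * (semi1 hh M (phi 0%nat) * semi1 hh M (phi 0%nat))) by ring.
      rewrite S00, SC, ST.
      assert (KK: K * K = 16 * rmax ^ 5 / (delta * delta)).
      { unfold K. replace (4 * (rmax ^ 2 * sqrt rmax) / delta * (4 * (rmax ^ 2 * sqrt rmax) / delta)) with (16 * rmax ^ 4 * (sqrt rmax * sqrt rmax) / (delta * delta)) by (field; lra).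
        rewrite SR. field. lra. }
      rewrite KK.
      pose proof rmax_bounds rmax delta Hrmax_pos Hrmax_root as RB.
      assert (R5: 4 * (1 + rmax) <= 16 * rmax ^ 5 / (delta * delta)).
      { apply Rmult_le_reg_r with (delta * delta). nra.
        replace (16 * rmax ^ 5 / (delta * delta) * (delta * delta)) with (16 * rmax ^ 5) by (field; lra).
        assert (delta * delta <= rmax * rmax) by nra.
        assert (4 * (1 + rmax) * (delta * delta) <= 4 * (1 + rmax) * (rmax * rmax)) by (apply Rmult_le_compat_l; lra).
        assert (4 * (1 + rmax) <= 16 * rmax ^ 3) by nra. nra. }
      assert (4 * c1 * nu * tau t 1 * a00 <= 4 * c1 * (r2 * (1 + rmax)) * T * a00).
      { assert (0 <= 4 * c1) by lra. assert (nu * tau t 1 <= (r2 * (1 + rmax)) * T) by (apply Rmult_le_compat; lra).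
        replace (4 * c1 * nu * tau t 1 * a00) with (4 * c1 * (nu * tau t 1) * a00) by ring.
        replace (4 * c1 * (r2 * (1 + rmax)) * T * a00) with (4 * c1 * ((r2 * (1 + rmax)) * T) * a00) by ring.
        apply Rmult_le_compat_r; auto. apply Rmult_le_compat_l; auto. }
      assert (4 * c1 * (r2 * (1 + rmax)) * T * a00 <= 16 * rmax ^ 5 / (delta * delta) * (c1 * r2) * T * a00).
      { replace (4 * c1 * (r2 * (1 + rmax)) * T * a00) with ((4 * (1 + rmax)) * (c1 * r2 * T * a00)) by ring.
        replace (16 * rmax ^ 5 / (delta * delta) * (c1 * r2) * T * a00) with ((16 * rmax ^ 5 / (delta * delta)) * (c1 * r2 * T * a00)) by ring.
        apply Rmult_le_compat_r; auto. apply Rmult_le_pos; auto. apply Rmult_le_pos; nra. }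
      lra. }
    assert (T1c: tau t 1 * CJ <= 1/20) by nra.
    assert (F1: 2 * tau t 1 * F * snu <= 5 * Zsum + (1/4) * (1 + r2) * nk 0).
    { assert (2 * tau t 1 * F * snu <= tau t 1 * (2 * snu) * z1 + (tau t 1 * CJ) * (2 * snu) * nk 0).
      { assert (0 <= tau t 1 * (2 * snu)) by nra.
        replace (tau t 1 * (2 * snu) * z1 + (tau t 1 * CJ) * (2 * snu) * nk 0) with (tau t 1 * (2 * snu) * (z1 + CJ * nk 0)) by ring.
        replace (2 * tau t 1 * F * snu) with (tau t 1 * (2 * snu) * F) by ring. apply Rmult_le_compat_l; auto. }
      assert (tau t 1 * (2 * snu) * z1 <= 5 * (P1 * z1)).
      { assert (tau t 1 * (2 * snu) <= 5 * P1) by nra. nra. }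
      assert ((tau t 1 * CJ) * (2 * snu) * nk 0 <= (1/4) * (1 + r2) * nk 0).
      { apply Rmult_le_compat_r; auto. assert (0 <= tau t 1 * CJ) by nra. nra. }
      lra. }
    assert (F2: 2 * (CJ * (P1 * nk 0)) <= 0.2 * nk 0).
    { assert (CJ * P1 <= 0.1) by nra. nra. }
    assert (F3: 2 * (CJ * (P2 * E2)) <= 0.2 * (2 + 3 * r2) * nk 0 + 6 * P2 * CJ * (tau t 1 + tau t 2) * z1).
    { assert (E2 <= (2 + 3 * r2) * nk 0 + 3 * (1 + r2) * tau t 1 * z1).
      { assert ((1 + r2) * nk 1 <= (1 + r2) * (2 * nk 0 + 3 * tau t 1 * z1)) by (apply Rmult_le_compat_l; lra). nra. }
      assert (0 <= CJ * P2) by nra.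
      assert (2 * (CJ * (P2 * E2)) <= 2 * (CJ * P2) * ((2 + 3 * r2) * nk 0 + 3 * (1 + r2) * tau t 1 * z1)).
      { replace (2 * (CJ * (P2 * E2))) with (2 * (CJ * P2) * E2) by ring. apply Rmult_le_compat_l; lra. }
      assert (CJ * P2 <= 0.1) by nra.
      assert (2 * (CJ * P2) * ((2 + 3 * r2) * nk 0) <= 0.2 * (2 + 3 * r2) * nk 0).
      { replace (0.2 * (2 + 3 * r2) * nk 0) with (0.2 * ((2 + 3 * r2) * nk 0)) by ring.
        apply Rmult_le_compat_r. nra. lra. }
      assert (TR: tau t 2 = r2 * tau t 1) by (unfold r2; apply (tau_ratio t N Hinc 2); lia).
      assert (2 * (CJ * P2) * (3 * (1 + r2) * tau t 1 * z1) = 6 * P2 * CJ * (tau t 1 + tau t 2) * z1) by (rewrite TR; ring).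
      lra. }
    assert (0 <= r2 * nk 0) by (apply Rmult_le_pos; lra). lra. }
  assert (0 < exp (2 * C1 * t (n - 1)%nat)) by apply exp_pos.
  assert (2 * AA n * exp (2 * C1 * t (n - 1)%nat) <= 2 * exp (2 * C1 * t (n - 1)%nat) * inner) by nra.
  lra.
Qed.


Lemma main_in_section :
  let h := hstep xl xr M in
  let tau_ := taumax t N in
  let Cr := sqrt rmax / (1 + rmax) ^ 2 in
  let cr := rmax ^ 2 * sqrt rmax in
  let C1 := c2 ^ 2 / (c1 * Cr * delta) + 2 * Rabs c3 + 2 * CJ * (1 + 2 * rmax) in
  let C2 := 4 * cr / delta * sqrt (c1 * ratio t 2) in
  tau_ <= 1 / (2 * C1) ->
  tau_ <= 1 / (2 * (c2 ^ 2 / c1 + 4 * Rabs c3 + 2 * CJ)) ->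
  tau_ <= 1 / (4 * (5 * CJ + 4 * Rabs c3)) ->
  (forall n : nat, (2 <= n <= N)%nat ->
     let common := (3 + ratio t 2) * nrm h M (phi 0%nat)
                   + 6 * p n (n - 2)%nat * CJ * (tau t 1 + tau t 2) * nrm h M (zeta 1%nat)
                   + C2 * sqrt tau_ * semi1 h M (phi 0%nat) in
     nrm h M (phi n)
       <= 2 * exp (2 * C1 * t (n - 1)%nat)
            * (common + 7 * sumR 1 n (fun k => p n (n - k)%nat * nrm h M (zeta k)))
     /\ 2 * exp (2 * C1 * t (n - 1)%nat)
            * (common + 7 * sumR 1 n (fun k => p n (n - k)%nat * nrm h M (zeta k)))
        <= 2 * exp (2 * C1 * t (n - 1)%nat)
            * (common + 7 * t n * maxR 1 n (fun k => nrm h M (zeta k))))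
  /\ ((1 <= N)%nat ->
      nrm h M (phi 1%nat) <= 2 * nrm h M (phi 0%nat) + 3 * t 1%nat * nrm h M (zeta 1%nat)).
Proof.
  intros h tau_ Cr cr C1 C2 H1 H2 H3.
  assert (Tpos: forall k, (1 <= k <= N)%nat -> tau t k <= tau_).
  { intros. unfold tau_, taumax. apply (maxR_ge (tau t) 1 N k H). }
  split.
  - intros n Hn common. split.
    + pose proof (final_main ltac:(lia) H1 H2 H3 n Hn) as FM. exact FM.
    + set (mx := maxR 1 n (fun k => nrm h M (zeta k))).
      assert (S1: sumR 1 n (fun k => p n (n - k)%nat * nrm h M (zeta k)) <= t n * mx).
      { apply Rle_trans with (sumR 1 n (fun k => p n (n - k)%nat * mx)).
        - apply sumR_le. intros. apply Rmult_le_compat_l. apply (p_nonneg t N Hinc p Hp); lia.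
          unfold mx. apply (maxR_ge (fun k => nrm h M (zeta k))). lia.
        - rewrite (sumR_ext _ _ _ (fun k => mx * p n (n - k)%nat)) by (intros; ring).
          rewrite sumR_scal. rewrite (p_sum_tau t N Hinc p Hp) by lia. rewrite Ht0. lra. }
      assert (0 < exp (2 * C1 * t (n - 1)%nat)) by apply exp_pos.
      apply Rmult_le_compat_l. lra. lra.
  - intros HN. pose proof (Tpos 1%nat ltac:(lia)) as T1. pose proof (tau_pos t N Hinc 1 ltac:(lia)) as T1p.
    assert (TC3 : tau_ * (4 * (5 * CJ + 4 * Rabs c3)) <= 1).
    { set (D := 4 * (5 * CJ + 4 * Rabs c3)) in *. pose proof (Rabs_pos c3). assert (0 < D) by (unfold D; lra).
      apply Rmult_le_reg_r with (/ D). apply Rinv_0_lt_compat; lra.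
      rewrite Rmult_assoc, Rinv_r by lra. rewrite Rmult_1_r. unfold Rdiv in H3. lra. }
    pose proof (Rabs_pos c3).
    pose proof (step1_L2 HN ltac:(nra) ltac:(nra)) as S.
    unfold nk in S. replace (tau t 1) with (t 1%nat) in S by (unfold tau; simpl; rewrite Ht0; ring). exact S.
Qed.

End Main.

Theorem mainTheorem1
  (N : nat) (t : nat -> R)
  (Ht0 : t 0%nat = 0)
  (Hinc : forall k : nat, (1 <= k <= N)%nat -> t (k - 1)%nat < t k)
  (rmax : R) (Hrmax_pos : 0 < rmax) (Hrmax_root : rmax ^ 3 = (2 * rmax + 1) ^ 2)
  (delta : R) (Hdelta : 0 < delta < rmax)
  (Hr2 : (2 <= N)%nat -> 0 < ratio t 2)
  (Hrk : forall k : nat, (3 <= k <= N)%nat -> 0 < ratio t k <= rmax - delta)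
  (p : nat -> nat -> R) (Hp : is_DCC t N p)
  (M : nat) (HM : (2 <= M)%nat) (xl xr : R) (Hx : xl < xr)
  (c1 c2 c3 : R) (Hc1 : 0 < c1)
  (rho : R -> R) (Hrho : exists B : R, forall z : R, Rabs (rho z) <= B)
  (CJ : R) (HCJ : 0 < CJ)
  (HJ : forall v : nat -> R, in_Vh M v ->
          nrm (hstep xl xr M) M (Jh rho xl xr M v) <= CJ * nrm (hstep xl xr M) M v)
  (phi zeta : nat -> nat -> R)
  (Hphi : forall n : nat, (n <= N)%nat -> in_Vh M (phi n))
  (Hscheme : forall n i : nat, (1 <= n <= N)%nat -> (1 <= i <= M - 1)%nat ->
     sumR 1 n (fun k => bdf2 t n (n - k)%nat * (phi k i - phi (k - 1)%nat i))
     - c1 * lapl (hstep xl xr M) (phi n) i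
     + c2 * grad (hstep xl xr M) (phi n) i
     + c3 * phi n i
     + Jh rho xl xr M (Ephi t phi n) i
     = zeta n i) :
  let h := hstep xl xr M in
  let tau_ := taumax t N in
  let Cr := sqrt rmax / (1 + rmax) ^ 2 in
  let cr := rmax ^ 2 * sqrt rmax in
  let C1 := c2 ^ 2 / (c1 * Cr * delta) + 2 * Rabs c3 + 2 * CJ * (1 + 2 * rmax) in
  let C2 := 4 * cr / delta * sqrt (c1 * ratio t 2) in
  tau_ <= 1 / (2 * C1) ->
  tau_ <= 1 / (2 * (c2 ^ 2 / c1 + 4 * Rabs c3 + 2 * CJ)) ->
  tau_ <= 1 / (4 * (5 * CJ + 4 * Rabs c3)) ->
  (forall n : nat, (2 <= n <= N)%nat ->
     let common := (3 + ratio t 2) * nrm h M (phi 0%nat)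
                   + 6 * p n (n - 2)%nat * CJ * (tau t 1 + tau t 2) * nrm h M (zeta 1%nat)
                   + C2 * sqrt tau_ * semi1 h M (phi 0%nat) in
     nrm h M (phi n)
       <= 2 * exp (2 * C1 * t (n - 1)%nat)
            * (common + 7 * sumR 1 n (fun k => p n (n - k)%nat * nrm h M (zeta k)))
     /\ 2 * exp (2 * C1 * t (n - 1)%nat)
            * (common + 7 * sumR 1 n (fun k => p n (n - k)%nat * nrm h M (zeta k)))
        <= 2 * exp (2 * C1 * t (n - 1)%nat)
            * (common + 7 * t n * maxR 1 n (fun k => nrm h M (zeta k))))
  /\ ((1 <= N)%nat ->
      nrm h M (phi 1%nat) <= 2 * nrm h M (phi 0%nat) + 3 * t 1%nat * nrm h M (zeta 1%nat)).
Proof.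
  exact (main_in_section N t Ht0 Hinc M HM xl xr Hx c1 c2 c3 Hc1 rho CJ HCJ HJ phi zeta Hphi Hscheme
           rmax delta Hrmax_pos Hrmax_root Hdelta Hrk p Hp).
Qed.
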